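(* Let $\gamma>0$, let $\Lambda(\boldsymbol Z,\boldsymbol n)$ be a rank-$r$ lattice in canonical form with $n=\prod_{i=1}^rn_i$ points, and let $\mathcal A(\boldsymbol Z,\boldsymbol n)=\{\boldsymbol h_{\boldsymbol\xi}:\boldsymbol\xi\in\mathbb Z_{n_1}\oplus\cdots\oplus\mathbb Z_{n_r}\}$ with $\boldsymbol Z^\top\boldsymbol h_{\boldsymbol\xi}\equiv\boldsymbol\xi\pmod{\boldsymbol n}$ be a full-cardinality anti-aliasing set chosen with minimal $\ell_2$ norm: $\|\boldsymbol h_{\boldsymbol\xi}\|_2=\min\{\|\boldsymbol h'\|_2:\boldsymbol h'\in\mathbb Z^d,\ \boldsymbol Z^\top\boldsymbol h'\equiv\boldsymbol\xi\pmod{\boldsymbol n}\}$. Let $v\in E_\alpha(\mathbb T^d)$ and $g\in E_\beta(\mathbb T^d)$, $\beta\ge2$. Let $D=\frac\gamma2D_{\boldsymbol n}$, $W=\frac1\gamma W_{\boldsymbol n}$. Then: (i) If $\alpha>5/2$, there is a constant $c_1$ independent of $\boldsymbol n$ and $\boldsymbol y$ (depending only on $d,\alpha,\gamma,v$) with $\|[D,W]\boldsymbol y\|_2\le c_1\|(D+I)\boldsymbol y\|_2$ for all $\boldsymbol y\in\mathbb R^n$. (ii) If $\alpha>9/2$, there is a constant $c_2$ independent of $\boldsymbol n$ and $\boldsymbol y$ (depending only on $d,\alpha,\gamma,v$) with $\|[D,[D,W]]\boldsymbol y\|_2\le c_2\|(D+I)^2\boldsymbol y\|_2$ for all $\boldsymbol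 y\in\mathbb R^n$.
   Context: Rank-$r$ lattice in canonical form: $\boldsymbol Z=(\boldsymbol z_1,\dots,\boldsymbol z_r)\in\mathbb Z^{d\times r}$, $\boldsymbol n=(n_1,\dots,n_r)\in\mathbb N^r$, $n_{i+1}\mid n_i$, the $\boldsymbol z_i$ linearly independent over $\mathbb Q$, components of $\boldsymbol z_i$ coprime to $n_i$; points $\boldsymbol p_{\boldsymbol k}=(\sum_i\boldsymbol z_ik_i/n_i)\bmod1$, $\boldsymbol k\in\mathbb Z_{n_1}\oplus\cdots\oplus\mathbb Z_{n_r}$, all distinct. Dual lattice $\Lambda^\perp=\{\boldsymbol h:\boldsymbol Z^\top\boldsymbol h\equiv\boldsymbol0\pmod{\boldsymbol n}\}$ (componentwise); an anti-aliasing set has no two distinct elements differing by an element of $\Lambda^\perp$; full cardinality means size $n$. Lexicographic enumeration: $\boldsymbol h^{(\chi)}=\boldsymbol h_{\boldsymbol\xi}$ with $\chi=\sum_{i=1}^r\xi_i\prod_{j>i}n_j$, and $\boldsymbol p^{(\kappa)}=\boldsymbol p_{\boldsymbol k}$ with $\kappa=\sum_{i=1}^rk_i\prod_{j>i}n_j$. Then $D_{\boldsymbol n}=\mathrm{diag}((4\pi^2\|\boldsymbol h^{(\chi)}\|_2^2)_{\chi=0}^{n-1})$, $V_{\boldsymbol n}=\mathrm{diag}((v(\boldsymbol p^{(\kappa)}))_{\kappa=0}^{n-1})$, $F_{\boldsymbol n}=\bigotimes_{i=1}^rF_{n_i}$ with $F_m=\frac1{\sqrt m}(\exp(-2\pi\mathrm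 i\,k\xi/m))_{\xi,k=0}^{m-1}$ the unitary Fourier matrix, and $W_{\boldsymbol n}=F_{\boldsymbol n}V_{\boldsymbol n}F_{\boldsymbol n}^{-1}$. $[A,B]=AB-BA$. Korobov space $E_\alpha(\mathbb T^d)=\{f\in L_2:\sum_{\boldsymbol h}|\widehat f(\boldsymbol h)|^2\prod_j\max(|h_j|^{2\alpha},1)<\infty\}$. *)

(* Defs.v *)
From Stdlib Require Import Reals ZArith QArith List.
Open Scope R_scope.

Record Cplx := mkC { Cre : R; Cim : R }.
Definition C0 : Cplx := mkC 0 0.
Definition C1 : Cplx := mkC 1 0.
Definition RtoC (x : R) : Cplx := mkC x 0.
Definition Cadd (a b : Cplx) : Cplx := mkC (Cre a + Cre b) (Cim a + Cim b).
Definition Copp (a : Cplx) : Cplx := mkC (- Cre a) (- Cim a).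
Definition Csub (a b : Cplx) : Cplx := Cadd a (Copp b).
Definition Cmul (a b : Cplx) : Cplx :=
  mkC (Cre a * Cre b - Cim a * Cim b) (Cre a * Cim b + Cim a * Cre b).
Definition Cexpi (t : R) : Cplx := mkC (cos t) (sin t).
Definition Cnorm2 (a : Cplx) : R := Cre a ^ 2 + Cim a ^ 2.

Fixpoint Csum (f : nat -> Cplx) (n : nat) : Cplx :=
  match n with O => C0 | S m => Cadd (Csum f m) (f m) end.
Fixpoint Cprod (f : nat -> Cplx) (n : nat) : Cplx :=
  match n with O => C1 | S m => Cmul (Cprod f m) (f m) end.
Fixpoint Rsum (f : nat -> R) (n : nat) : R :=
  match n with O => 0 | S m => Rsum f m + f m end.
Fixpoint Rprod (f : nat -> R) (n : nat) : R :=
  match n with O => 1 | S m => Rprod f m * f m end.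
Fixpoint Zsum (f : nat -> Z) (n : nat) : Z :=
  match n with O => 0%Z | S m => (Zsum f m + f m)%Z end.
Fixpoint Qsum (f : nat -> Q) (n : nat) : Q :=
  match n with O => 0%Q | S m => (Qsum f m + f m)%Q end.
Fixpoint nprod_range (f : nat -> nat) (a len : nat) : nat :=
  match len with O => 1%nat | S l => (f a * nprod_range f (S a) l)%nat end.

(* Zm i j = j-th component of generating vector z_i (i < r, j < d);
   nn i = n_i (i < r).  Total number of points n = n_1 * ... * n_r. *)
Definition npoints (r : nat) (nn : nat -> nat) : nat := nprod_range nn 0 r.

(* lexicographic enumeration: chi = sum_i xi_i prod_{j>i} n_j ;
   lexdig r nn chi i = xi_i, the i-th mixed-radix digit of chi. *)
Definition lexdig (r : nat) (nn : nat -> nat) (chi : nat) (i : nat) : nat :=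
  ((chi / nprod_range nn (S i) (r - S i)) mod nn i)%nat.

Definition lattice_point (r : nat) (Zm : nat -> nat -> Z) (nn : nat -> nat)
  (k : nat -> nat) (j : nat) : R :=
  frac_part (Rsum (fun i => IZR (Zm i j) * INR (k i) / INR (nn i)) r).

Definition canonical_lattice (d r : nat) (Zm : nat -> nat -> Z) (nn : nat -> nat) : Prop :=
  (forall i, (i < r)%nat -> (1 <= nn i)%nat) /\
  (forall i, (S i < r)%nat -> Nat.divide (nn (S i)) (nn i)) /\
  (forall a : nat -> Q,
      (forall j, (j < d)%nat -> Qeq (Qsum (fun i => (a i * inject_Z (Zm i j))%Q) r) 0%Q) ->
      forall i, (i < r)%nat -> Qeq (a i) 0%Q) /\
  (forall i j, (i < r)%nat -> (j < d)%nat -> Z.gcd (Zm i j) (Z.of_nat (nn i)) = 1%Z) /\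
  (forall k k' : nat -> nat,
      (forall i, (i < r)%nat -> (k i < nn i)%nat) ->
      (forall i, (i < r)%nat -> (k' i < nn i)%nat) ->
      (forall j, (j < d)%nat -> lattice_point r Zm nn k j = lattice_point r Zm nn k' j) ->
      forall i, (i < r)%nat -> k i = k' i).

Definition dual_cong (d r : nat) (Zm : nat -> nat -> Z) (nn : nat -> nat)
  (h : nat -> Z) (xi : nat -> nat) : Prop :=
  forall i, (i < r)%nat ->
    (Z.of_nat (nn i) | Zsum (fun j => (Zm i j * h j)%Z) d - Z.of_nat (xi i))%Z.

Definition l2normZ (d : nat) (h : nat -> Z) : R :=
  sqrt (IZR (Zsum (fun j => (h j * h j)%Z) d)).

(* hs chi = h^(chi) = h_xi where xi = lexdig chi; a full-cardinality anti-aliasing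
   set with Z^T h_xi = xi (mod n) and h_xi of minimal l2 norm in its class. *)
Definition min_norm_antialias (d r : nat) (Zm : nat -> nat -> Z) (nn : nat -> nat)
  (hs : nat -> nat -> Z) : Prop :=
  forall chi, (chi < npoints r nn)%nat ->
    dual_cong d r Zm nn (hs chi) (lexdig r nn chi) /\
    (forall h' : nat -> Z, dual_cong d r Zm nn h' (lexdig r nn chi) ->
       l2normZ d (hs chi) <= l2normZ d h').

Definition Mat := nat -> nat -> Cplx.
Definition Mmul (n : nat) (A B : Mat) : Mat :=
  fun i j => Csum (fun k => Cmul (A i k) (B k j)) n.
Definition Madd (A B : Mat) : Mat := fun i j => Cadd (A i j) (B i j).
Definition Msub (A B : Mat) : Mat := fun i j => Csub (A i j) (B i j).
Definition Mscale (a : R) (A : Mat) : Mat := fun i j => Cmul (RtoC a) (A i j).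
Definition Mid : Mat := fun i j => if Nat.eqb i j then C1 else C0.
Definition Mdiag (f : nat -> Cplx) : Mat := fun i j => if Nat.eqb i j then f i else C0.
Definition Mcomm (n : nat) (A B : Mat) : Mat := Msub (Mmul n A B) (Mmul n B A).
Definition Mvec (n : nat) (A : Mat) (y : nat -> Cplx) : nat -> Cplx :=
  fun i => Csum (fun k => Cmul (A i k) (y k)) n.
Definition vnorm (n : nat) (x : nat -> Cplx) : R := sqrt (Rsum (fun i => Cnorm2 (x i)) n).

Definition Dn (d : nat) (hs : nat -> nat -> Z) : Mat :=
  Mdiag (fun chi => RtoC (4 * PI ^ 2 * (l2normZ d (hs chi)) ^ 2)).

(* F_n = kron_i F_{n_i} in lexicographic order:
   entry (chi,kappa) = prod_i (1/sqrt n_i) exp(-2 pi i xi_i k_i / n_i) *)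
Definition Fn (r : nat) (nn : nat -> nat) : Mat :=
  fun chi kappa =>
    Cprod (fun i => Cmul (RtoC (/ sqrt (INR (nn i))))
       (Cexpi (- (2 * PI * INR (lexdig r nn chi i) * INR (lexdig r nn kappa i)) / INR (nn i)))) r.
(* F_n^{-1} = kron_i F_{n_i}^{-1}, F_m^{-1} = conjugate transpose of the unitary F_m *)
Definition Fninv (r : nat) (nn : nat -> nat) : Mat :=
  fun kappa chi =>
    Cprod (fun i => Cmul (RtoC (/ sqrt (INR (nn i))))
       (Cexpi ((2 * PI * INR (lexdig r nn chi i) * INR (lexdig r nn kappa i)) / INR (nn i)))) r.

Definition Vn (r : nat) (Zm : nat -> nat -> Z) (nn : nat -> nat) (v : (nat -> R) -> Cplx) : Mat :=
  Mdiag (fun kappa => v (lattice_point r Zm nn (lexdig r nn kappa))).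

Definition Wn (r : nat) (Zm : nat -> nat -> Z) (nn : nat -> nat) (v : (nat -> R) -> Cplx) : Mat :=
  let n := npoints r nn in Mmul n (Mmul n (Fn r nn) (Vn r Zm nn v)) (Fninv r nn).

Definition zrange (N : nat) : list Z :=
  map (fun t => (Z.of_nat t - Z.of_nat N)%Z) (seq 0 (2 * N + 1)).
(* all h in Z^d with |h_j| <= N (components j >= d are 0) *)
Fixpoint boxlist (m N : nat) : list (nat -> Z) :=
  match m with
  | O => (fun _ => 0%Z) :: nil
  | S m' => flat_map (fun h => map (fun t => fun j => if Nat.eqb j m' then t else h j) (zrange N))
                     (boxlist m' N)
  end.
Definition CsumL {A} (l : list A) (f : A -> Cplx) : Cplx := fold_right (fun a acc => Cadd (f a) acc) C0 l.
Definition RsumL {A} (l : list A) (f : A -> R) : R := fold_right (fun a acc => f a + acc) 0 l.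

Definition korobov (d : nat) (alpha : R) (fhat : (nat -> Z) -> Cplx) : Prop :=
  exists M, forall N,
    RsumL (boxlist d N) (fun h => Cnorm2 (fhat h) *
       Rprod (fun j => Rmax (Rpower (IZR (Z.abs (h j))) (2 * alpha)) 1) d) <= M.

(* f(x) = sum_{h in Z^d} fhat(h) exp(2 pi i h.x)  (limit of the cube partial sums) *)
Definition fourier_series_at (d : nat) (fhat : (nat -> Z) -> Cplx) (x : nat -> R) (s : Cplx) : Prop :=
  let S N := CsumL (boxlist d N)
      (fun h => Cmul (fhat h) (Cexpi (2 * PI * Rsum (fun j => IZR (h j) * x j) d))) in
  Un_cv (fun N => Cre (S N)) (Cre s) /\ Un_cv (fun N => Cim (S N)) (Cim s).

(* Main.v *)
Require Import Defs.
From Stdlib Require Import Reals ZArith QArith List Lra Lia Psatz FunctionalExtensionality Classical ClassicalEpsilon.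
Open Scope R_scope.

Lemma Cext a b : Cre a = Cre b -> Cim a = Cim b -> a = b.
Proof. destruct a, b; simpl; intros; subst; reflexivity. Qed.

Ltac cext := apply Cext; simpl; try ring.

Lemma Csum_ext f g n : (forall k, (k < n)%nat -> f k = g k) -> Csum f n = Csum g n.
Proof. induction n; intros H; simpl; auto. rewrite IHn by (intros; apply H; lia). rewrite H by lia. auto. Qed.

Lemma Rsum_ext f g n : (forall k, (k < n)%nat -> f k = g k) -> Rsum f n = Rsum g n.
Proof. induction n; intros H; simpl; auto. rewrite IHn by (intros; apply H; lia). rewrite H by lia. auto. Qed.

Lemma Cprod_ext f g n : (forall k, (k < n)%nat -> f k = g k) -> Cprod f n = Cprod g n.
Proof. induction n; intros H; simpl; auto. rewrite IHn by (intros; apply H; lia). rewrite H by lia. auto. Qed.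

Lemma Rprod_ext f g n : (forall k, (k < n)%nat -> f k = g k) -> Rprod f n = Rprod g n.
Proof. induction n; intros H; simpl; auto. rewrite IHn by (intros; apply H; lia). rewrite H by lia. auto. Qed.

Lemma Zsum_ext f g n : (forall k, (k < n)%nat -> f k = g k) -> Zsum f n = Zsum g n.
Proof. induction n; intros H; simpl; auto. rewrite IHn by (intros; apply H; lia). rewrite H by lia. auto. Qed.

Lemma Cre_Csum f n : Cre (Csum f n) = Rsum (fun k => Cre (f k)) n.
Proof. induction n; simpl; auto. rewrite IHn; auto. Qed.
Lemma Cim_Csum f n : Cim (Csum f n) = Rsum (fun k => Cim (f k)) n.
Proof. induction n; simpl; auto. rewrite IHn; auto. Qed.

Lemma Rsum_plus f g n : Rsum (fun k => f k + g k) n = Rsum f n + Rsum g n.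
Proof. induction n; simpl; [ring|rewrite IHn; ring]. Qed.
Lemma Rsum_scal c f n : Rsum (fun k => c * f k) n = c * Rsum f n.
Proof. induction n; simpl; [ring|rewrite IHn; ring]. Qed.
Lemma Rsum_opp f n : Rsum (fun k => - f k) n = - Rsum f n.
Proof. induction n; simpl; [ring|rewrite IHn; ring]. Qed.
Lemma Rsum_swap f n m : Rsum (fun i => Rsum (fun j => f i j) m) n = Rsum (fun j => Rsum (fun i => f i j) n) m.
Proof. induction n; simpl. induction m; simpl; [auto| rewrite <- IHm; ring].
rewrite IHn. rewrite <- Rsum_plus. auto. Qed.
Lemma Rsum_le f g n : (forall k, (k < n)%nat -> f k <= g k) -> Rsum f n <= Rsum g n.
Proof. induction n; intros H; simpl. lra. assert (H1 := H n (Nat.lt_succ_diag_r n)). assert (Rsum f n <= Rsum g n) by (apply IHn; intros; apply H; lia). lra. Qed.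
Lemma Rsum_nonneg f n : (forall k, (k < n)%nat -> 0 <= f k) -> 0 <= Rsum f n.
Proof. intros H. replace 0 with (Rsum (fun _ => 0) n). apply Rsum_le; auto. induction n; simpl; auto. rewrite IHn; auto; lra. Qed.

Lemma Csum_mul_l c f n : Csum (fun k => Cmul c (f k)) n = Cmul c (Csum f n).
Proof. induction n; simpl. cext. rewrite IHn. cext. Qed.
Lemma Csum_mul_r c f n : Csum (fun k => Cmul (f k) c) n = Cmul (Csum f n) c.
Proof. induction n; simpl. cext. rewrite IHn. cext. Qed.
Lemma Csum_add f g n : Csum (fun k => Cadd (f k) (g k)) n = Cadd (Csum f n) (Csum g n).
Proof. induction n; simpl. cext. rewrite IHn. cext. Qed.
Lemma Csum_swap f n m : Csum (fun i => Csum (fun j => f i j) m) n = Csum (fun j => Csum (fun i => f i j) n) m.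
Proof. apply Cext; rewrite ?Cre_Csum, ?Cim_Csum;
 [ erewrite Rsum_ext by (intros; apply Cre_Csum) | erewrite Rsum_ext by (intros; apply Cim_Csum) ];
 rewrite Rsum_swap; apply Rsum_ext; intros; rewrite ?Cre_Csum, ?Cim_Csum; auto. Qed.

Lemma Csum_zero n : Csum (fun _ => C0) n = C0.
Proof. induction n; simpl; auto. rewrite IHn. cext. Qed.

Lemma Csum_delta f n i : (i < n)%nat -> (forall k, (k < n)%nat -> k <> i -> f k = C0) -> Csum f n = f i.
Proof.
  induction n; intros Hi H. lia. simpl.
  destruct (Nat.eq_dec i n).
  - subst. replace (Csum f n) with (Csum (fun _ => C0) n).
    + rewrite Csum_zero. cext.
    + apply Csum_ext. intros; symmetry; apply H; lia.
  - rewrite IHn by (try lia; intros; apply H; lia). rewrite (H n) by lia. cext.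
Qed.

Lemma Mmul_diag_l n e X i j : (i < n)%nat -> Mmul n (Mdiag e) X i j = Cmul (e i) (X i j).
Proof.
  intros Hi. unfold Mmul, Mdiag. rewrite (Csum_delta _ n i); auto.
  - rewrite Nat.eqb_refl; auto.
  - intros k Hk Hne. destruct (Nat.eqb_spec i k). lia. cext.
Qed.

Lemma Mmul_diag_r n e X i j : (j < n)%nat -> Mmul n X (Mdiag e) i j = Cmul (X i j) (e j).
Proof.
  intros Hj. unfold Mmul, Mdiag. rewrite (Csum_delta _ n j); auto.
  - rewrite Nat.eqb_refl; auto.
  - intros k Hk Hne. destruct (Nat.eqb_spec k j). lia. cext.
Qed.

Lemma Mscale_diag c e : Mscale c (Mdiag e) = Mdiag (fun i => Cmul (RtoC c) (e i)).
Proof. unfold Mscale, Mdiag. apply functional_extensionality; intro i; apply functional_extensionality; intro j.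
  destruct (Nat.eqb i j); auto. cext. Qed.

Lemma Madd_diag_id e : Madd (Mdiag e) Mid = Mdiag (fun i => Cadd (e i) Defs.C1).
Proof. unfold Madd, Mdiag, Mid. apply functional_extensionality; intro i; apply functional_extensionality; intro j.
  destruct (Nat.eqb i j); auto. cext. Qed.

Lemma Mcomm_diag n e X i j : (i < n)%nat -> (j < n)%nat ->
  Mcomm n (Mdiag e) X i j = Cmul (Csub (e i) (e j)) (X i j).
Proof. intros. unfold Mcomm, Msub. rewrite Mmul_diag_l, Mmul_diag_r by auto. cext. Qed.

Lemma Mvec_diag n e y i : (i < n)%nat -> Mvec n (Mdiag e) y i = Cmul (e i) (y i).
Proof.
  intros Hi. unfold Mvec, Mdiag. rewrite (Csum_delta _ n i); auto.
  - rewrite Nat.eqb_refl; auto.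
  - intros k Hk Hne. destruct (Nat.eqb_spec i k). lia. cext.
Qed.

Lemma Mmul_diag_diag n e f i j : (i < n)%nat -> Mmul n (Mdiag e) (Mdiag f) i j = Mdiag (fun k => Cmul (e k) (f k)) i j.
Proof. intros. rewrite Mmul_diag_l by auto. unfold Mdiag. destruct (Nat.eqb_spec i j); subst; auto. cext. Qed.

Section MR.
Variable nn : nat -> nat.
Notation P := (nprod_range nn).

Lemma nprod_split a x y : P a (x + y) = (P a x * P (a + x) y)%nat.
Proof. revert a; induction x; intros a; simpl. rewrite Nat.add_0_r, Nat.add_0_r; lia.
  rewrite IHx. replace (S a + x)%nat with (a + S x)%nat by lia. lia. Qed.

Lemma nprod_pos a len : (forall i, (i < a + len)%nat -> (1 <= nn i)%nat) -> (0 < P a len)%nat.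
Proof. revert a; induction len; intros a H; simpl. lia.
  assert (1 <= nn a)%nat by (apply H; lia). assert (0 < P (S a) len)%nat by (apply IHlen; intros; apply H; lia). nia. Qed.

Definition ld a len k i := ((k / P (a + S i) (len - S i)) mod nn (a + i))%nat.

Lemma ld0 a l k0 k' : (k0 < nn a)%nat -> (k' < P (S a) l)%nat ->
  ld a (S l) (k0 * P (S a) l + k') 0 = k0.
Proof. intros H1 H2. unfold ld. replace (a + 1)%nat with (S a) by lia. replace (S l - 1)%nat with l by lia.
  assert (nprod_range nn (S a) l <> 0)%nat by lia. rewrite Nat.div_add_l by assumption. rewrite Nat.add_0_r. rewrite Nat.div_small by lia. rewrite Nat.add_0_r. apply Nat.mod_small. lia. Qed.

Lemma ldS a l k0 k' i : (forall j, (j < a + S l)%nat -> (1 <= nn j)%nat) -> (i < l)%nat ->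
  ld a (S l) (k0 * P (S a) l + k') (S i) = ld (S a) l k' i.
Proof. intros Hp Hi. unfold ld.
  replace (a + S (S i))%nat with (S a + S i)%nat by lia.
  replace (S l - S (S i))%nat with (l - S i)%nat by lia.
  replace (a + S i)%nat with (S a + i)%nat by lia.
  set (Q := P (S a + S i) (l - S i)).
  assert (HP : P (S a) l = (P (S a) i * nn (S a + i) * Q)%nat).
  { replace l with (S i + (l - S i))%nat at 1 by lia. rewrite nprod_split.
    replace (S i) with (i + 1)%nat at 1 by lia. rewrite nprod_split. simpl.
    replace (S (a + i)) with (S a + i)%nat by lia. unfold Q. replace (S (a + S i)) with (S a + S i)%nat by lia. lia. }
  assert (HQ : (0 < Q)%nat). { apply nprod_pos. intros; apply Hp; lia. }
  assert (Hn : (1 <= nn (S a + i))%nat) by (apply Hp; lia).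
  rewrite HP. replace (k0 * (P (S a) i * nn (S a + i) * Q) + k')%nat with ((k0 * P (S a) i * nn (S a + i)) * Q + k')%nat by lia.
  rewrite Nat.div_add_l by lia.
  replace (k0 * P (S a) i * nn (S a + i) + k' / Q)%nat with (k' / Q + (k0 * P (S a) i) * nn (S a + i))%nat by lia.
  apply Nat.Div0.mod_add.
Qed.

Lemma Csum_app g x y : Csum g (x + y) = Cadd (Csum g x) (Csum (fun k => g (x + k)%nat) y).
Proof. induction y; simpl. rewrite Nat.add_0_r. cext. rewrite Nat.add_succ_r. simpl. rewrite IHy. cext. Qed.

Lemma Csum_mulidx g A B : Csum g (A * B) = Csum (fun k0 => Csum (fun k' => g (k0 * B + k')%nat) B) A.
Proof. induction A; simpl. auto. rewrite Nat.add_comm, Csum_app, IHA. auto. Qed.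

Lemma Cprod_shift g l : Cprod g (S l) = Cmul (g 0%nat) (Cprod (fun i => g (S i)) l).
Proof. induction l. simpl. cext. change (Cprod g (S (S l))) with (Cmul (Cprod g (S l)) (g (S l))).
  rewrite IHl. simpl. cext. Qed.

Lemma mixed_sum f a len : (forall i, (i < a + len)%nat -> (1 <= nn i)%nat) ->
  Csum (fun k => Cprod (fun i => f (a + i)%nat (ld a len k i)) len) (P a len)
  = Cprod (fun i => Csum (f (a + i)%nat) (nn (a + i)%nat)) len.
Proof.
  revert a; induction len; intros a Hp.
  - simpl. cext.
  - change (P a (S len)) with (nn a * P (S a) len)%nat. rewrite Csum_mulidx.
    rewrite Cprod_shift.
    erewrite Csum_ext.
    2:{ intros k0 Hk0. apply Csum_ext. intros k' Hk'. rewrite Cprod_shift. rewrite ld0 by auto.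
        rewrite (Cprod_ext _ (fun i => f (S a + i)%nat (ld (S a) len k' i))).
        2:{ intros i Hi. rewrite ldS by auto. f_equal. lia. }
        reflexivity. }
    erewrite Csum_ext. 2:{ intros k0 Hk0. rewrite Csum_mul_l. reflexivity. }
    rewrite IHlen by (intros; apply Hp; lia).
    rewrite Csum_mul_r. rewrite Nat.add_0_r. f_equal. apply Cprod_ext. intros; f_equal; f_equal; lia.
Qed.

Lemma ld_bound a len k i : (1 <= nn (a + i))%nat -> (ld a len k i < nn (a + i))%nat.
Proof. intros. unfold ld. apply Nat.mod_upper_bound. lia. Qed.

Lemma ld_inj a len k1 k2 : (forall i, (i < a + len)%nat -> (1 <= nn i)%nat) ->
  (k1 < P a len)%nat -> (k2 < P a len)%nat -> (forall i, (i < len)%nat -> ld a len k1 i = ld a len k2 i) -> k1 = k2.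
Proof.
  revert a k1 k2; induction len; intros a k1 k2 Hp H1 H2 Hd.
  - simpl in *. lia.
  - change (P a (S len)) with (nn a * P (S a) len)%nat in *.
    assert (HQ : (0 < P (S a) len)%nat) by (apply nprod_pos; intros; apply Hp; lia).
    set (Q := P (S a) len) in *.
    assert (E1 : k1 = ((k1 / Q) * Q + k1 mod Q)%nat) by (rewrite (Nat.div_mod k1 Q) at 1; lia).
    assert (E2 : k2 = ((k2 / Q) * Q + k2 mod Q)%nat) by (rewrite (Nat.div_mod k2 Q) at 1; lia).
    assert (B1 : (k1 / Q < nn a)%nat) by (apply Nat.Div0.div_lt_upper_bound; lia).
    assert (B2 : (k2 / Q < nn a)%nat) by (apply Nat.Div0.div_lt_upper_bound; lia).
    assert (R1 : (k1 mod Q < Q)%nat) by (apply Nat.mod_upper_bound; lia).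
    assert (R2 : (k2 mod Q < Q)%nat) by (apply Nat.mod_upper_bound; lia).
    assert (D0 := Hd 0%nat ltac:(lia)). rewrite E1, E2 in D0. unfold Q in D0. rewrite !ld0 in D0 by auto.
    assert (DS : k1 mod Q = k2 mod Q).
    { apply (IHlen (S a)); auto. intros; apply Hp; lia. intros i Hi. assert (Hi' := Hd (S i) ltac:(lia)).
      rewrite E1, E2 in Hi'. unfold Q in Hi'. rewrite !ldS in Hi' by auto. exact Hi'. }
    rewrite E1, E2. unfold Q in *. rewrite D0, DS. auto.
Qed.
End MR.

Lemma Cexpi_add a b : Cexpi (a + b) = Cmul (Cexpi a) (Cexpi b).
Proof. unfold Cexpi; cext; [rewrite cos_plus | rewrite sin_plus]; ring. Qed.

Lemma Cexpi_0 : Cexpi 0 = Defs.C1.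
Proof. unfold Cexpi. rewrite cos_0, sin_0. reflexivity. Qed.

Lemma Cexpi_Rsum th r : Cexpi (Rsum th r) = Cprod (fun i => Cexpi (th i)) r.
Proof. induction r; simpl. apply Cexpi_0. rewrite Cexpi_add, IHr. auto. Qed.

Lemma Cexpi_nat x k : Cexpi (x + 2 * PI * INR k) = Cexpi x.
Proof. unfold Cexpi. replace (x + 2 * PI * INR k) with (x + 2 * INR k * PI) by ring.
  rewrite cos_period, sin_period. auto. Qed.

Lemma Cexpi_period x z : Cexpi (x + 2 * PI * IZR z) = Cexpi x.
Proof. destruct z as [|p|p].
  - simpl. rewrite Rmult_0_r, Rplus_0_r; auto.
  - replace (IZR (Z.pos p)) with (INR (Pos.to_nat p)) by (rewrite INR_IZR_INZ, positive_nat_Z; reflexivity). apply Cexpi_nat.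
  - replace (IZR (Z.neg p)) with (- INR (Pos.to_nat p)).
    2:{ rewrite INR_IZR_INZ, positive_nat_Z. rewrite <- Ropp_Ropp_IZR. reflexivity. }
    rewrite <- (Cexpi_nat (x + 2 * PI * - INR (Pos.to_nat p)) (Pos.to_nat p)). f_equal. ring.
Qed.

Lemma Cexpi_int z : Cexpi (2 * PI * IZR z) = Defs.C1.
Proof. rewrite <- (Rplus_0_l (2 * PI * IZR z)), Cexpi_period. apply Cexpi_0. Qed.

Lemma Cexpi_eq1 th : Cexpi th = Defs.C1 -> exists z, th = 2 * PI * IZR z.
Proof. intros H. assert (Hc : cos th = 1) by (apply (f_equal Cre) in H; exact H).
  assert (Hs : sin (th / 2) = 0).
  { assert (E := cos_2a_sin (th / 2)). replace (2 * (th / 2)) with th in E by field. rewrite Hc in E.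
    assert (sin (th/2) * sin (th/2) = 0) by lra. destruct (Rmult_integral _ _ H0); auto. }
  destruct (sin_eq_0_0 _ Hs) as [k Hk]. exists k. lra. Qed.

Lemma Csum_shift g m : Cadd (Csum g m) (g m) = Cadd (g 0%nat) (Csum (fun k => g (S k)) m).
Proof. induction m; simpl. cext. assert (E1 := f_equal Cre IHm); assert (E2 := f_equal Cim IHm); simpl in *; apply Cext; simpl; lra. Qed.

Lemma geom_div m a : (1 <= m)%nat -> (Z.of_nat m | a)%Z ->
  Csum (fun k => Cexpi (2 * PI * IZR a * INR k / INR m)) m = RtoC (INR m).
Proof. intros Hm [q Hq]. subst a.
  rewrite (Csum_ext _ (fun _ => Defs.C1)).
  - clear Hm. induction m. cext. simpl Csum. rewrite IHm. rewrite S_INR. cext.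
  - intros k Hk. rewrite <- (Cexpi_int (q * Z.of_nat k)). f_equal. rewrite !mult_IZR, <- !INR_IZR_INZ.
    field. apply not_0_INR; lia.
Qed.

Lemma geom_ndiv m a : (1 <= m)%nat -> ~ (Z.of_nat m | a)%Z ->
  Csum (fun k => Cexpi (2 * PI * IZR a * INR k / INR m)) m = C0.
Proof. intros Hm Hnd.
  assert (Hm0 : INR m <> 0) by (apply not_0_INR; lia).
  set (th := 2 * PI * IZR a / INR m).
  set (g := fun k => Cexpi (INR k * th)).
  assert (E : Csum (fun k => Cexpi (2 * PI * IZR a * INR k / INR m)) m = Csum g m).
  { apply Csum_ext; intros; unfold g, th; f_equal; field; auto. }
  rewrite E. set (S0 := Csum g m).
  assert (Hshift : Cmul S0 (Cexpi th) = S0).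
  { assert (H1 := Csum_shift g m).
    assert (Hgm : g m = g 0%nat). { unfold g, th. rewrite Rmult_0_l, Cexpi_0. rewrite <- (Cexpi_int a). f_equal. field; auto. }
    assert (H2 : Csum (fun k => g (S k)) m = Cmul S0 (Cexpi th)).
    { unfold S0. rewrite <- Csum_mul_r. apply Csum_ext. intros k _. unfold g. rewrite <- Cexpi_add. f_equal. rewrite S_INR; ring. }
    rewrite Hgm, H2 in H1. fold S0 in H1. assert (E1 := f_equal Cre H1); assert (E2 := f_equal Cim H1); simpl in E1, E2. apply Cext; simpl in *; lra. }
  assert (Hne : Cexpi th <> Defs.C1).
  { intros Heq. destruct (Cexpi_eq1 _ Heq) as [z Hz]. apply Hnd. exists z.
    unfold th in Hz. apply eq_IZR. rewrite mult_IZR, <- INR_IZR_INZ.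
    assert (PI > 0) by apply PI_RGT_0. apply (Rmult_eq_reg_l (2 * PI)); [|lra].
    apply (Rmult_eq_reg_r (/ INR m)). rewrite Hz at 1. field. auto. apply Rinv_neq_0_compat; auto. }
  destruct S0 as [x y]. unfold Cexpi in *. set (c := cos th) in *. set (s := sin th) in *. clearbody c s.
  injection Hshift as E1 E2.
  assert (Hpos : 0 < (c - 1) ^ 2 + s ^ 2).
  { destruct (Req_dec s 0) as [Hs|Hs]; [destruct (Req_dec c 1) as [Hc|Hc]|].
    - exfalso. apply Hne. unfold Defs.C1. rewrite Hs, Hc. reflexivity.
    - assert (c - 1 <> 0) by lra. assert (0 < (c-1)²) by (apply Rsqr_pos_lt; auto). unfold Rsqr in *. assert (0 <= s^2) by apply pow2_ge_0. replace ((c-1)^2) with ((c-1)*(c-1)) by ring. lra.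
    - assert (0 < s²) by (apply Rsqr_pos_lt; auto). unfold Rsqr in *. assert (0 <= (c-1)^2) by apply pow2_ge_0. replace (s^2) with (s*s) by ring. lra. }
  assert (Ex : x * ((c - 1) ^ 2 + s ^ 2) = 0).
  { replace (x * ((c - 1) ^ 2 + s ^ 2)) with ((c-1) * (x * c - y * s - x) + s * (x * s + y * c - y)) by ring. rewrite E1, E2. ring. }
  assert (Ey : y * ((c - 1) ^ 2 + s ^ 2) = 0).
  { replace (y * ((c - 1) ^ 2 + s ^ 2)) with (- s * (x * c - y * s - x) + (c - 1) * (x * s + y * c - y)) by ring. rewrite E1, E2. ring. }
  apply Cext; simpl; [ destruct (Rmult_integral _ _ Ex) | destruct (Rmult_integral _ _ Ey)]; auto; lra.
Qed.

Definition ind (P : Prop) : R := if excluded_middle_informative P then 1 else 0.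

Lemma Cprod_mul f g r : Cmul (Cprod f r) (Cprod g r) = Cprod (fun i => Cmul (f i) (g i)) r.
Proof. induction r; simpl. cext. rewrite <- IHr. cext. Qed.

Lemma Cprod_polar a t r : Cprod (fun i => Cmul (RtoC (a i)) (Cexpi (t i))) r = Cmul (RtoC (Rprod a r)) (Cexpi (Rsum t r)).
Proof. induction r; simpl. rewrite Cexpi_0. cext. rewrite IHr, Cexpi_add. unfold Cexpi. cext. Qed.

Lemma Rprod_mul f g r : Rprod (fun i => f i * g i) r = Rprod f r * Rprod g r.
Proof. induction r; simpl. ring. rewrite IHr. ring. Qed.

Lemma Rprod_inv f r : (forall i, (i < r)%nat -> f i <> 0) -> Rprod (fun i => / f i) r = / Rprod f r.
Proof. induction r; intros H; simpl. field. rewrite IHr by (intros; apply H; lia).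
  assert (Rprod f r <> 0). { clear IHr. induction r; simpl. lra. apply Rmult_integral_contrapositive_currified. apply IHr; intros; apply H; lia. apply H; lia. }
  assert (f r <> 0) by (apply H; lia). field; auto. Qed.

Lemma Rprod_shift g l : Rprod g (S l) = g 0%nat * Rprod (fun i => g (S i)) l.
Proof. induction l. simpl. ring. change (Rprod g (S (S l))) with (Rprod g (S l) * g (S l)). rewrite IHl. simpl. ring. Qed.

Lemma INR_nprod nn a len : INR (nprod_range nn a len) = Rprod (fun i => INR (nn (a + i)%nat)) len.
Proof. revert a; induction len; intros a. simpl; auto. change (nprod_range nn a (S len)) with (nn a * nprod_range nn (S a) len)%nat. rewrite mult_INR, IHlen, Rprod_shift. rewrite Nat.add_0_r. f_equal.
  apply Rprod_ext. intros; f_equal; f_equal; lia. Qed.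

Lemma IZR_Zsum f n : IZR (Zsum f n) = Rsum (fun j => IZR (f j)) n.
Proof. induction n; simpl; auto. rewrite plus_IZR, IHn. auto. Qed.

Lemma Cprod_cond (P : nat -> Prop) (a : nat -> R) f r :
  (forall i, (i < r)%nat -> f i = if excluded_middle_informative (P i) then RtoC (a i) else C0) ->
  Cprod f r = if excluded_middle_informative (forall i, (i < r)%nat -> P i) then RtoC (Rprod a r) else C0.
Proof. induction r; intros H; simpl.
  - destruct (excluded_middle_informative _) as [_|n]. cext. exfalso; apply n; intros; lia.
  - rewrite IHr by (intros; apply H; lia). rewrite (H r) by lia.
    destruct (excluded_middle_informative (forall i, (i < r)%nat -> P i)) as [A|A];
    destruct (excluded_middle_informative (P r)) as [B|B];
    destruct (excluded_middle_informative (forall i, (i < S r)%nat -> P i)) as [C|C].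
    all: try cext.
    + exfalso. apply C. intros i Hi. destruct (Nat.eq_dec i r). subst; auto. apply A; lia.
    + exfalso. apply B, C; lia.
    + exfalso. apply A. intros; apply C; lia.
    + exfalso. apply A. intros; apply C; lia.
Qed.

Section Lat.
Variables (d r : nat) (Zm : nat -> nat -> Z) (nn : nat -> nat).
Hypothesis Hpos : forall i, (i < r)%nat -> (1 <= nn i)%nat.

Definition Mi (h : nat -> Z) (i : nat) : Z := Zsum (fun j => (Zm i j * h j)%Z) d.
Definition xi (k : nat) (i : nat) : nat := lexdig r nn k i.
Definition cls (h : nat -> Z) (c c' : nat) : Prop :=
  forall i, (i < r)%nat -> (Z.of_nat (nn i) | Mi h i - Z.of_nat (xi c i) + Z.of_nat (xi c' i))%Z.

Lemma pair_factor c t1 t2 : Cmul (Cmul (RtoC c) (Cexpi t1)) (Cmul (RtoC c) (Cexpi t2)) = Cmul (RtoC (c * c)) (Cexpi (t1 + t2)).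
Proof. rewrite Cexpi_add. unfold Cexpi. cext. Qed.

Lemma FF c c' k :
  Cmul (Fn r nn c k) (Fninv r nn k c') =
  Cmul (RtoC (/ INR (npoints r nn)))
    (Cexpi (Rsum (fun i => 2 * PI * (INR (xi c' i) - INR (xi c i)) * INR (xi k i) / INR (nn i)) r)).
Proof.
  unfold Fn, Fninv. rewrite Cprod_mul.
  rewrite (Cprod_ext _ (fun i => Cmul (RtoC (/ INR (nn i))) (Cexpi (2 * PI * (INR (xi c' i) - INR (xi c i)) * INR (xi k i) / INR (nn i))))).
  - rewrite Cprod_polar. unfold npoints. rewrite INR_nprod. simpl. rewrite Rprod_inv. auto.
    intros i Hi. apply not_0_INR. specialize (Hpos i Hi). lia.
  - intros i Hi. assert (Hn : 0 < INR (nn i)) by (apply lt_0_INR; specialize (Hpos i Hi); lia).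
    assert (Hs := sqrt_sqrt (INR (nn i)) (Rlt_le _ _ Hn)). assert (0 < sqrt (INR (nn i))) by (apply sqrt_lt_R0; auto).
    rewrite pair_factor. f_equal.
    + f_equal. rewrite <- Rinv_mult, Hs. auto.
    + f_equal. unfold xi. field. lra.
Qed.
Lemma angle h kk : exists Z0,
  2 * PI * Rsum (fun j => IZR (h j) * lattice_point r Zm nn kk j) d =
  Rsum (fun i => 2 * PI * IZR (Mi h i) * INR (kk i) / INR (nn i)) r + 2 * PI * IZR Z0.
Proof.
  set (s := fun j => Rsum (fun i => IZR (Zm i j) * INR (kk i) / INR (nn i)) r).
  exists (- Zsum (fun j => (h j * Int_part (s j))%Z) d)%Z.
  unfold lattice_point, frac_part. fold s.
  rewrite opp_IZR, IZR_Zsum.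
  rewrite (Rsum_ext (fun j => IZR (h j) * (s j - IZR (Int_part (s j)))) (fun j => IZR (h j) * s j + - IZR (h j * Int_part (s j))%Z))
    by (intros; rewrite mult_IZR; ring).
  rewrite Rsum_plus, Rsum_opp.
  assert (E : Rsum (fun j => IZR (h j) * s j) d = Rsum (fun i => IZR (Mi h i) * INR (kk i) / INR (nn i)) r).
  { unfold s. rewrite (Rsum_ext _ (fun j => Rsum (fun i => IZR (h j) * (IZR (Zm i j) * INR (kk i) / INR (nn i))) r))
      by (intros; rewrite Rsum_scal; auto).
    rewrite Rsum_swap. apply Rsum_ext. intros i Hi. unfold Mi. rewrite IZR_Zsum.
    rewrite (Rsum_ext _ (fun j => (INR (kk i) / INR (nn i)) * IZR (Zm i j * h j))) by (intros; rewrite mult_IZR; unfold Rdiv; ring).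
    rewrite Rsum_scal. unfold Rdiv; ring. }
  rewrite E. rewrite Rmult_plus_distr_l. rewrite <- Rsum_scal.
  replace (Rsum (fun i => 2 * PI * IZR (Mi h i) * INR (kk i) / INR (nn i)) r) with
   (Rsum (fun k => 2 * PI * (IZR (Mi h k) * INR (kk k) / INR (nn k))) r).
  ring. apply Rsum_ext; intros; unfold Rdiv; ring.
Qed.

Lemma ortho h c c' :
  Csum (fun k => Cmul (Cexpi (2 * PI * Rsum (fun j => IZR (h j) * lattice_point r Zm nn (lexdig r nn k) j) d))
                      (Cmul (Fn r nn c k) (Fninv r nn k c'))) (npoints r nn)
  = RtoC (ind (cls h c c')).
Proof.
  set (m := fun i => (Mi h i - Z.of_nat (xi c i) + Z.of_nat (xi c' i))%Z).
  set (f := fun i k => Cexpi (2 * PI * IZR (m i) * INR k / INR (nn i))).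
  rewrite (Csum_ext _ (fun k => Cmul (RtoC (/ INR (npoints r nn))) (Cprod (fun i => f (0 + i)%nat (ld nn 0 r k i)) r))).
  2:{ intros k Hk. rewrite FF. destruct (angle h (lexdig r nn k)) as [Z0 HZ]. rewrite HZ.
      replace (Cmul (Cexpi (Rsum (fun i => 2 * PI * IZR (Mi h i) * INR (lexdig r nn k i) / INR (nn i)) r + 2 * PI * IZR Z0))
       (Cmul (RtoC (/ INR (npoints r nn)))
          (Cexpi (Rsum (fun i => 2 * PI * (INR (xi c' i) - INR (xi c i)) * INR (xi k i) / INR (nn i)) r))))
      with (Cmul (RtoC (/ INR (npoints r nn))) (Cexpi (Rsum (fun i => 2 * PI * IZR (Mi h i) * INR (lexdig r nn k i) / INR (nn i)) r + 2 * PI * IZR Z0 +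
          Rsum (fun i => 2 * PI * (INR (xi c' i) - INR (xi c i)) * INR (xi k i) / INR (nn i)) r)))
      by (rewrite Cexpi_add; unfold Cexpi; cext).
      f_equal. rewrite Rplus_assoc, (Rplus_comm (2 * PI * IZR Z0)), <- Rplus_assoc, Cexpi_period.
      rewrite <- Rsum_plus, Cexpi_Rsum. apply Cprod_ext. intros i Hi. unfold f, m, xi. change (ld nn 0 r k i) with (lexdig r nn k i). simpl.
      f_equal. rewrite plus_IZR, minus_IZR, <- !INR_IZR_INZ. field. apply not_0_INR. specialize (Hpos i Hi); lia. }
  rewrite Csum_mul_l. unfold npoints. rewrite (mixed_sum nn f 0 r) by (intros; apply Hpos; lia).
  rewrite (Cprod_cond (fun i => (Z.of_nat (nn (0 + i)) | m i)%Z) (fun i => INR (nn (0 + i)%nat))).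
  2:{ intros i Hi. destruct (excluded_middle_informative _) as [D|D]; unfold f.
      apply geom_div; auto. apply geom_ndiv; auto. }
  unfold ind, cls. simpl.
  destruct (excluded_middle_informative (forall i, (i < r)%nat -> (Z.of_nat (nn i) | m i)%Z)) as [A|A];
  destruct (excluded_middle_informative _) as [B|B].
  - assert (Epr : Rprod (fun i => INR (nn i)) r = INR (nprod_range nn 0 r)) by (rewrite INR_nprod; apply Rprod_ext; auto).
    rewrite Epr. unfold Cmul, RtoC; simpl. apply Cext; simpl; [|ring]. field. apply not_0_INR.
    assert (0 < nprod_range nn 0 r)%nat by (apply nprod_pos; intros; apply Hpos; lia). lia.
  - exfalso; apply B; intros i Hi; apply A; auto.
  - exfalso; apply A; intros i Hi; apply B; auto.
  - cext.
Qed.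
End Lat.

Definition Ccv (u : nat -> Cplx) (l : Cplx) : Prop :=
  Un_cv (fun N => Cre (u N)) (Cre l) /\ Un_cv (fun N => Cim (u N)) (Cim l).

Lemma Rcv_const c : Un_cv (fun _ => c) c.
Proof. intros e He. exists 0%nat. intros. unfold Rdist. rewrite Rminus_diag, Rabs_R0. auto. Qed.

Lemma Ccv_const c : Ccv (fun _ => c) c.
Proof. split; apply Rcv_const. Qed.

Lemma Ccv_add u v a b : Ccv u a -> Ccv v b -> Ccv (fun N => Cadd (u N) (v N)) (Cadd a b).
Proof. intros [A1 A2] [B1 B2]; split; simpl; apply CV_plus; auto. Qed.

Lemma Ccv_mul u v a b : Ccv u a -> Ccv v b -> Ccv (fun N => Cmul (u N) (v N)) (Cmul a b).
Proof. intros [A1 A2] [B1 B2]; split; simpl.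
  apply CV_minus; apply CV_mult; auto. apply CV_plus; apply CV_mult; auto. Qed.

Lemma Ccv_Csum u l n : (forall k, (k < n)%nat -> Ccv (fun N => u N k) (l k)) ->
  Ccv (fun N => Csum (u N) n) (Csum l n).
Proof. induction n; intros H; simpl. apply Ccv_const. apply Ccv_add. apply IHn; intros; apply H; lia. apply H; lia. Qed.

Lemma Ccv_ext u v l : (forall N, u N = v N) -> Ccv u l -> Ccv v l.
Proof. intros E [A B]. split; [eapply Un_cv_ext|eapply Un_cv_ext]; eauto; intros; simpl; rewrite E; auto. Qed.

Lemma CsumL_mul_r {A} (l : list A) g c : Cmul (CsumL l g) c = CsumL l (fun h => Cmul (g h) c).
Proof. induction l; simpl. unfold C0; cext. rewrite <- IHl. cext. Qed.
Lemma CsumL_mul_l {A} (l : list A) g c : Cmul c (CsumL l g) = CsumL l (fun h => Cmul c (g h)).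
Proof. induction l; simpl. unfold C0; cext. rewrite <- IHl. cext. Qed.
Lemma Csum_CsumL {A} (l : list A) G n : Csum (fun k => CsumL l (G k)) n = CsumL l (fun h => Csum (fun k => G k h) n).
Proof. induction l; simpl. apply Csum_zero. rewrite Csum_add, IHl. auto. Qed.
Lemma CsumL_ext {A} (l : list A) f g : (forall h, In h l -> f h = g h) -> CsumL l f = CsumL l g.
Proof. induction l; intros H; simpl; auto. rewrite H by (left; auto). rewrite IHl; auto. intros; apply H; right; auto. Qed.

Section WL.
Variables (d r : nat) (Zm : nat -> nat -> Z) (nn : nat -> nat).
Hypothesis Hpos : forall i, (i < r)%nat -> (1 <= nn i)%nat.
Variables (v : (nat -> R) -> Cplx) (vhat : (nat -> Z) -> Cplx).
Hypothesis Hfs : forall x, fourier_series_at d vhat x (v x).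

Definition wN N c c' := CsumL (boxlist d N) (fun h => Cmul (vhat h) (RtoC (ind (cls d r Zm nn h c c')))).

Definition SN N (x : nat -> R) := CsumL (boxlist d N)
      (fun h => Cmul (vhat h) (Cexpi (2 * PI * Rsum (fun j => IZR (h j) * x j) d))).

Lemma W_entry c c' : (c < npoints r nn)%nat ->
  Wn r Zm nn v c c' = Csum (fun k => Cmul (v (lattice_point r Zm nn (lexdig r nn k)))
        (Cmul (Fn r nn c k) (Fninv r nn k c'))) (npoints r nn).
Proof. intros Hc. unfold Wn, Vn. unfold Mmul at 1. apply Csum_ext. intros k Hk.
  fold (Mmul (npoints r nn) (Fn r nn) (Mdiag (fun kappa => v (lattice_point r Zm nn (lexdig r nn kappa))))).
  rewrite Mmul_diag_r by auto. cext. Qed.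

Lemma wN_eq N c c' : wN N c c' = Csum (fun k => Cmul (SN N (lattice_point r Zm nn (lexdig r nn k)))
        (Cmul (Fn r nn c k) (Fninv r nn k c'))) (npoints r nn).
Proof. unfold SN. erewrite Csum_ext. 2:{ intros k Hk. rewrite CsumL_mul_r. reflexivity. }
  rewrite Csum_CsumL. unfold wN. apply CsumL_ext. intros h _.
  erewrite Csum_ext. 2:{ intros k Hk. replace (Cmul (Cmul (vhat h) (Cexpi (2 * PI * Rsum (fun j => IZR (h j) * lattice_point r Zm nn (lexdig r nn k) j) d))) (Cmul (Fn r nn c k) (Fninv r nn k c')))
     with (Cmul (vhat h) (Cmul (Cexpi (2 * PI * Rsum (fun j => IZR (h j) * lattice_point r Zm nn (lexdig r nn k) j) d)) (Cmul (Fn r nn c k) (Fninv r nn k c')))) by cext. reflexivity. }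
  rewrite Csum_mul_l. rewrite ortho; auto. Qed.

Lemma W_lim c c' : (c < npoints r nn)%nat -> Ccv (fun N => wN N c c') (Wn r Zm nn v c c').
Proof. intros Hc. rewrite W_entry by auto. eapply Ccv_ext. intros N; symmetry; apply wN_eq.
  apply Ccv_Csum. intros k Hk. apply Ccv_mul; [|apply Ccv_const].
  destruct (Hfs (lattice_point r Zm nn (lexdig r nn k))) as [A B]. split; auto. Qed.
End WL.

Lemma ln_le_sub1 y : 0 < y -> ln y <= y - 1.
Proof. intros Hy. assert (H := exp_ineq1_le (ln y)). rewrite exp_ln in H; lra. Qed.

Lemma tele q x : 0 < q -> 0 < x ->
  q * Rpower (x + 1) (- (q + 1)) <= Rpower x (- q) - Rpower (x + 1) (- q).
Proof. intros Hq Hx. unfold Rpower.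
  set (L := ln (x + 1)). set (l := ln x).
  assert (HL : L - l >= / (x + 1)).
  { assert (H := ln_le_sub1 (x / (x + 1)) ltac:(apply Rdiv_lt_0_compat; lra)).
    unfold Rdiv in H. rewrite ln_mult, ln_Rinv in H by (try apply Rinv_0_lt_compat; lra). fold L l in H.
    replace (x * / (x + 1) - 1) with (- / (x + 1)) in H by (field; lra). lra. }
  assert (E1 : exp (- q * l) = exp (- q * L) * exp (q * (L - l))) by (rewrite <- exp_plus; f_equal; ring).
  assert (E2 : exp (- (q + 1) * L) = exp (- q * L) * / (x + 1)).
  { replace (- (q + 1) * L) with (- q * L + - L) by ring. rewrite exp_plus. f_equal. unfold L. rewrite exp_Ropp, exp_ln by lra. auto. }
  assert (E3 := exp_ineq1_le (q * (L - l))).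
  assert (P := exp_pos (- q * L)).
  rewrite E1, E2.
  assert (q * (L - l) >= q * / (x + 1)) by (apply Rmult_ge_compat_l; lra).
  assert (exp (- q * L) * exp (q * (L - l)) >= exp (- q * L) * (1 + q * / (x + 1))).
  { apply Rmult_ge_compat_l. lra. lra. }
  nra.
Qed.

Lemma Rpower_pos x y : 0 < Rpower x y.
Proof. unfold Rpower. apply exp_pos. Qed.

Lemma Rpower_one y : Rpower 1 y = 1.
Proof. unfold Rpower. rewrite ln_1, Rmult_0_r. apply exp_0. Qed.

Lemma zeta_bound p N : 1 < p -> Rsum (fun k => Rpower (INR (S k)) (- p)) N <= 1 + / (p - 1).
Proof. intros Hp.
  assert (C : forall N, Rsum (fun k => Rpower (INR (S k)) (- p)) (S N) <= 1 + (1 - Rpower (INR (S N)) (1 - p)) / (p - 1)).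
  { induction N0.
    - simpl. rewrite Rplus_0_l, Rpower_one, Rpower_one. replace (1 + (1 - 1) / (p - 1)) with 1 by (field; lra). lra.
    - change (Rsum (fun k => Rpower (INR (S k)) (- p)) (S (S N0))) with
        (Rsum (fun k => Rpower (INR (S k)) (- p)) (S N0) + Rpower (INR (S (S N0))) (- p)).
      assert (T := tele (p - 1) (INR (S N0)) ltac:(lra) ltac:(apply lt_0_INR; lia)).
      rewrite (S_INR (S N0)). replace (- (p - 1 + 1)) with (- p) in T by ring.
      replace (- (p - 1)) with (1 - p) in T by ring.
      apply Rle_trans with (1 + (1 - Rpower (INR (S N0)) (1 - p)) / (p - 1) + Rpower (INR (S N0) + 1) (- p)). lra.
      apply (Rmult_le_reg_l (p - 1)). lra.
      replace ((p - 1) * (1 + (1 - Rpower (INR (S N0)) (1 - p)) / (p - 1) + Rpower (INR (S N0) + 1) (- p)))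
        with ((p - 1) + (1 - Rpower (INR (S N0)) (1 - p)) + (p - 1) * Rpower (INR (S N0) + 1) (- p)) by (field; lra).
      replace ((p - 1) * (1 + (1 - Rpower (INR (S N0) + 1) (1 - p)) / (p - 1)))
        with ((p - 1) + (1 - Rpower (INR (S N0) + 1) (1 - p))) by (field; lra).
      lra. }
  destruct N. simpl. assert (0 < / (p - 1)) by (apply Rinv_0_lt_compat; lra). lra.
  eapply Rle_trans. apply C. assert (H := Rpower_pos (INR (S N)) (1 - p)).
  assert (0 < / (p - 1)) by (apply Rinv_0_lt_compat; lra).
  unfold Rdiv. rewrite Rmult_minus_distr_r, Rmult_1_l.
  assert (0 < Rpower (INR (S N)) (1 - p) * / (p - 1)) by (apply Rmult_lt_0_compat; auto). lra.
Qed.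

Lemma RsumL_app {A} (l1 l2 : list A) f : RsumL (l1 ++ l2) f = RsumL l1 f + RsumL l2 f.
Proof. induction l1; simpl. ring. rewrite IHl1. ring. Qed.
Lemma RsumL_map {A B} (l : list A) (g : A -> B) f : RsumL (map g l) f = RsumL l (fun x => f (g x)).
Proof. induction l; simpl; auto. rewrite IHl; auto. Qed.
Lemma RsumL_ext {A} (l : list A) f g : (forall h, In h l -> f h = g h) -> RsumL l f = RsumL l g.
Proof. induction l; intros H; simpl; auto. rewrite H by (left; auto). rewrite IHl; auto. intros; apply H; right; auto. Qed.
Lemma RsumL_le {A} (l : list A) f g : (forall h, In h l -> f h <= g h) -> RsumL l f <= RsumL l g.
Proof. induction l; intros H; simpl. lra. apply Rplus_le_compat. apply H; left; auto. apply IHl; intros; apply H; right; auto. Qed.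
Lemma RsumL_scal {A} (l : list A) c f : RsumL l (fun x => c * f x) = c * RsumL l f.
Proof. induction l; simpl. ring. rewrite IHl. ring. Qed.
Lemma RsumL_plus {A} (l : list A) f g : RsumL l (fun x => f x + g x) = RsumL l f + RsumL l g.
Proof. induction l; simpl. ring. rewrite IHl. ring. Qed.
Lemma RsumL_flat_map {A B} (l : list A) (g : A -> list B) f : RsumL (flat_map g l) f = RsumL l (fun x => RsumL (g x) f).
Proof. induction l; simpl; auto. rewrite RsumL_app, IHl. auto. Qed.
Lemma RsumL_nonneg {A} (l : list A) f : (forall h, In h l -> 0 <= f h) -> 0 <= RsumL l f.
Proof. intros H. induction l; simpl. lra. assert (0 <= f a) by (apply H; left; auto). assert (0 <= RsumL l f) by (apply IHl; intros; apply H; right; auto). lra. Qed.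

Lemma zrange_S N : zrange (S N) = (- Z.of_nat (S N))%Z :: (zrange N ++ (Z.of_nat (S N) :: nil)).
Proof. unfold zrange. replace (2 * S N + 1)%nat with (S (S (2 * N + 1))) by lia.
  set (k := (2 * N + 1)%nat).
  change (seq 0 (S (S k))) with (0%nat :: seq 1 (S k)).
  rewrite seq_S, <- seq_shift. rewrite map_cons, map_app, map_map.
  f_equal. f_equal.
  - apply map_ext. intros; lia.
  - rewrite map_cons. f_equal. unfold k. lia.
Qed.

Lemma zrange_sum N f : RsumL (zrange N) f = f 0%Z + Rsum (fun k => f (Z.of_nat (S k)) + f (- Z.of_nat (S k))%Z) N.
Proof. induction N. simpl. ring. rewrite zrange_S. simpl RsumL. rewrite RsumL_app, IHN. simpl. ring. Qed.

Section KB.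
Variables (alpha : R) (m : nat).
Definition pp := 2 * alpha - INR (4 * m).
Hypothesis Hp : 1 < pp.

Definition phi (t : Z) := (1 + IZR t ^ 2) ^ (2 * m) / Rmax (Rpower (IZR (Z.abs t)) (2 * alpha)) 1.

Lemma phi_nonneg t : 0 <= phi t.
Proof. unfold phi. apply Rle_mult_inv_pos. apply pow_le. assert (0 <= IZR t ^ 2) by apply pow2_ge_0. lra.
  eapply Rlt_le_trans with 1. lra. apply Rmax_r. Qed.

Lemma phi_0 : phi 0 <= 1.
Proof. unfold phi. simpl IZR. replace ((1 + 0 ^ 2) ^ (2 * m)) with 1 by (rewrite pow_ne_zero by lia; simpl; rewrite Rplus_0_r, pow1; auto).
  assert (H := Rmax_r (Rpower 0 (2 * alpha)) 1). unfold Rdiv. rewrite Rmult_1_l.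
  set (X := Rmax (Rpower 0 (2 * alpha)) 1) in *. assert (0 < X) by lra.
  apply (Rmult_le_reg_l X); auto. rewrite Rinv_r by lra. lra. Qed.

Lemma phi_le t : t <> 0%Z -> phi t <= 2 ^ (2 * m) * Rpower (IZR (Z.abs t)) (- pp).
Proof. intros Ht. set (x := IZR (Z.abs t)).
  assert (Hx : 1 <= x). { unfold x. apply IZR_le. lia. }
  assert (Ex : IZR t ^ 2 = x ^ 2). { unfold x. rewrite abs_IZR. rewrite <- (pow2_abs (IZR t)). auto. }
  unfold phi. fold x. rewrite Ex.
  assert (Hp0 : 0 < Rpower x (2 * alpha)) by apply Rpower_pos.
  apply Rle_trans with ((2 * x ^ 2) ^ (2 * m) / Rpower x (2 * alpha)).
  - unfold Rdiv. apply Rmult_le_compat.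
    + apply pow_le. nra.
    + left. apply Rinv_0_lt_compat. eapply Rlt_le_trans with 1. lra. apply Rmax_r.
    + apply pow_incr. split. nra. nra.
    + apply Rinv_le_contravar; auto. apply Rmax_l.
  - rewrite Rpow_mult_distr, <- pow_mult, pow_mult.
    rewrite <- (Rpower_pow (2 * (2 * m)) x) by lra. unfold pp. rewrite Ropp_minus_distr.
    unfold Rminus. rewrite Rpower_plus, Rpower_Ropp.
    replace (INR (2 * (2 * m))) with (INR (4 * m)) by (f_equal; lia).
    right. unfold Rdiv. ring.
Qed.

Definition B1 := 1 + 2 * 2 ^ (2 * m) * (1 + / (pp - 1)).

Lemma zsum_bound N : RsumL (zrange N) phi <= B1.
Proof. rewrite zrange_sum. unfold B1. apply Rplus_le_compat. apply phi_0.
  apply Rle_trans with (Rsum (fun k => 2 * 2 ^ (2 * m) * Rpower (INR (S k)) (- pp)) N).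
  - apply Rsum_le. intros k Hk.
    assert (A1 := phi_le (Z.of_nat (S k)) ltac:(lia)).
    assert (A2 := phi_le (- Z.of_nat (S k)) ltac:(lia)).
    replace (IZR (Z.abs (Z.of_nat (S k)))) with (INR (S k)) in A1 by (rewrite INR_IZR_INZ; f_equal; lia).
    replace (IZR (Z.abs (- Z.of_nat (S k)))) with (INR (S k)) in A2 by (rewrite INR_IZR_INZ; f_equal; lia).
    lra.
  - rewrite Rsum_scal. apply Rmult_le_compat_l. assert (0 < 2 ^ (2 * m)) by (apply pow_lt; lra). lra.
    apply zeta_bound; auto.
Qed.
End KB.

Lemma box_prod (f : Z -> R) N m : RsumL (boxlist m N) (fun h => Rprod (fun j => f (h j)) m) = (RsumL (zrange N) f) ^ m.
Proof. induction m; simpl. ring.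
  rewrite RsumL_flat_map. rewrite <- IHm, <- RsumL_scal.
  apply RsumL_ext. intros h _. rewrite RsumL_map.
  rewrite (RsumL_ext _ _ (fun t => Rprod (fun j => f (h j)) m * f t)).
  - rewrite RsumL_scal. ring.
  - intros t _. rewrite Nat.eqb_refl. f_equal. apply Rprod_ext. intros j Hj.
    destruct (Nat.eqb_spec j m). lia. auto.
Qed.

Lemma sum_prod x d : (forall j, (j < d)%nat -> 0 <= x j) -> 1 + Rsum x d <= Rprod (fun j => 1 + x j) d.
Proof. induction d; intros H; simpl. lra.
  assert (A := IHd ltac:(intros; apply H; lia)). assert (B := H d ltac:(lia)).
  assert (C : 0 <= Rsum x d) by (apply Rsum_nonneg; intros; apply H; lia).
  assert (1 <= Rprod (fun j => 1 + x j) d) by lra. nra. Qed.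

Lemma Rprod_pow f d k : Rprod (fun j => f j ^ k) d = (Rprod f d) ^ k.
Proof. induction d; simpl. rewrite pow1; auto. rewrite IHd, Rpow_mult_distr. auto. Qed.

Lemma Rprod_pos f d : (forall j, (j < d)%nat -> 0 < f j) -> 0 < Rprod f d.
Proof. induction d; intros H; simpl. lra. apply Rmult_lt_0_compat. apply IHd; intros; apply H; lia. apply H; lia. Qed.

Definition bZ d (h : nat -> Z) := IZR (Zsum (fun j => (h j * h j)%Z) d).
Definition rho d alpha (h : nat -> Z) := Rprod (fun j => Rmax (Rpower (IZR (Z.abs (h j))) (2 * alpha)) 1) d.

Lemma bZ_eq d h : bZ d h = Rsum (fun j => IZR (h j) ^ 2) d.
Proof. unfold bZ. rewrite IZR_Zsum. apply Rsum_ext. intros; rewrite mult_IZR; ring. Qed.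

Lemma bZ_nonneg d h : 0 <= bZ d h.
Proof. rewrite bZ_eq. apply Rsum_nonneg. intros; apply pow2_ge_0. Qed.

Lemma rho_pos d alpha h : 0 < rho d alpha h.
Proof. apply Rprod_pos. intros. eapply Rlt_le_trans with 1. lra. apply Rmax_r. Qed.

Lemma weight_bound d alpha m h :
  (1 + bZ d h) ^ (2 * m) / rho d alpha h <= Rprod (fun j => phi alpha m (h j)) d.
Proof. unfold phi. unfold Rdiv. rewrite Rprod_mul, Rprod_inv.
  2:{ intros. apply Rgt_not_eq. eapply Rlt_le_trans with 1. lra. apply Rmax_r. }
  unfold rho. apply Rmult_le_compat_r.
  - left. apply Rinv_0_lt_compat. apply Rprod_pos. intros. eapply Rlt_le_trans with 1. lra. apply Rmax_r.
  - rewrite Rprod_pow. apply pow_incr. split. assert (H := bZ_nonneg d h); lra.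
    rewrite bZ_eq. apply sum_prod. intros; apply pow2_ge_0.
Qed.

Lemma amgm a w r : 0 <= a -> 0 < r -> sqrt a * w <= (a * r + w ^ 2 / r) / 2.
Proof. intros Ha Hr. assert (Hs := sqrt_sqrt a Ha). set (s := sqrt a) in *. clearbody s.
  apply (Rmult_le_reg_l (2 * r)). lra.
  replace (2 * r * ((a * r + w ^ 2 / r) / 2)) with (a * r * r + w ^ 2) by (field; lra).
  rewrite <- Hs. assert (H := pow2_ge_0 (s*r - w)). replace (s*s*r*r + w^2) with ((s*r-w)^2 + 2*r*(s*w)) by ring. lra. Qed.

Lemma korobov_bound d alpha m vhat : 1 < pp alpha m -> korobov d alpha vhat ->
  exists A, 1 <= A /\ forall N,
    RsumL (boxlist d N) (fun h => sqrt (Cnorm2 (vhat h)) * (1 + bZ d h) ^ m) <= A.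
Proof. intros Hp [M HM].
  exists (Rmax 1 ((M + B1 alpha m ^ d) / 2)). split. apply Rmax_l. intros N.
  eapply Rle_trans. 2: apply Rmax_r.
  apply Rle_trans with (RsumL (boxlist d N) (fun h => (Cnorm2 (vhat h) * rho d alpha h + (1 + bZ d h) ^ (2 * m) / rho d alpha h) / 2)).
  - apply RsumL_le. intros h _. replace ((1 + bZ d h) ^ (2 * m)) with (((1 + bZ d h) ^ m) ^ 2) by (rewrite <- pow_mult; f_equal; lia).
    apply amgm. unfold Cnorm2. assert (0 <= Cre (vhat h) ^ 2) by apply pow2_ge_0. assert (0 <= Cim (vhat h) ^ 2) by apply pow2_ge_0. lra.
    apply rho_pos.
  - rewrite (RsumL_ext _ _ (fun h => / 2 * (Cnorm2 (vhat h) * rho d alpha h + (1 + bZ d h) ^ (2 * m) / rho d alpha h))) by (intros; field; apply Rgt_not_eq, rho_pos).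
    rewrite RsumL_scal, RsumL_plus. unfold Rdiv at 2. rewrite (Rmult_comm _ (/ 2)). apply Rmult_le_compat_l. lra.
    apply Rplus_le_compat.
    + specialize (HM N). unfold rho. eapply Rle_trans; [|exact HM]. right. auto.
    + apply Rle_trans with (RsumL (boxlist d N) (fun h => Rprod (fun j => phi alpha m (h j)) d)).
      apply RsumL_le; intros; apply weight_bound.
      rewrite box_prod. apply pow_incr. split. apply RsumL_nonneg. intros; apply phi_nonneg.
      apply zsum_bound; auto.
Qed.

Definition cmod (z : Cplx) := sqrt (Cnorm2 z).

Lemma Cnorm2_nonneg z : 0 <= Cnorm2 z.
Proof. unfold Cnorm2. assert (H1 := pow2_ge_0 (Cre z)). assert (H2 := pow2_ge_0 (Cim z)). lra. Qed.

Lemma cmod_nonneg z : 0 <= cmod z.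
Proof. apply sqrt_pos. Qed.

Lemma cmod_sq z : cmod z ^ 2 = Cnorm2 z.
Proof. unfold cmod. simpl. rewrite Rmult_1_r. apply sqrt_sqrt, Cnorm2_nonneg. Qed.

Lemma cmod_mul a b : cmod (Cmul a b) = cmod a * cmod b.
Proof. unfold cmod. rewrite <- sqrt_mult by apply Cnorm2_nonneg. f_equal. unfold Cnorm2, Cmul; simpl. ring. Qed.

Lemma cmod_RtoC x : cmod (RtoC x) = Rabs x.
Proof. unfold cmod, Cnorm2, RtoC; cbn [Cre Cim]. replace (x ^ 2 + 0 ^ 2) with (x²) by (unfold Rsqr; ring). apply sqrt_Rsqr_abs. Qed.

Lemma cmod_add a b : cmod (Cadd a b) <= cmod a + cmod b.
Proof. unfold cmod. apply Rsqr_incr_0_var.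
  2:{ assert (H1 := sqrt_pos (Cnorm2 a)). assert (H2 := sqrt_pos (Cnorm2 b)). lra. }
  rewrite Rsqr_sqrt by apply Cnorm2_nonneg.
  unfold Rsqr. set (sa := sqrt (Cnorm2 a)). set (sb := sqrt (Cnorm2 b)).
  assert (Ha : sa * sa = Cnorm2 a) by apply sqrt_sqrt, Cnorm2_nonneg.
  assert (Hb : sb * sb = Cnorm2 b) by apply sqrt_sqrt, Cnorm2_nonneg.
  assert (P1 : 0 <= sa) by apply sqrt_pos. assert (P2 : 0 <= sb) by apply sqrt_pos.
  clearbody sa sb. unfold Cnorm2 in *. destruct a as [x1 y1], b as [x2 y2]. simpl in *.
  assert (CS : (x1 * x2 + y1 * y2) <= sa * sb).
  { destruct (Rle_dec (x1 * x2 + y1 * y2) 0). nra.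
    apply Rsqr_incr_0_var. 2: nra. unfold Rsqr.
    replace (sa * sb * (sa * sb)) with ((sa * sa) * (sb * sb)) by ring. rewrite Ha, Hb.
    assert (0 <= (x1 * y2 - x2 * y1) ^ 2) by apply pow2_ge_0. nra. }
  nra.
Qed.

Lemma cmod_Csum f n : cmod (Csum f n) <= Rsum (fun k => cmod (f k)) n.
Proof. induction n; simpl. unfold cmod, Cnorm2, C0; cbn [Cre Cim]. replace (0 ^ 2 + 0 ^ 2) with 0 by ring. rewrite sqrt_0. apply Rle_refl.
  eapply Rle_trans. apply cmod_add. lra. Qed.

Lemma cmod_CsumL {A} (l : list A) f : cmod (CsumL l f) <= RsumL l (fun k => cmod (f k)).
Proof. induction l; simpl. unfold cmod, Cnorm2, C0; cbn [Cre Cim]. replace (0 ^ 2 + 0 ^ 2) with 0 by ring. rewrite sqrt_0. apply Rle_refl.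
  eapply Rle_trans. apply cmod_add. lra. Qed.

Lemma ind_01 P : 0 <= ind P <= 1.
Proof. unfold ind. destruct (excluded_middle_informative P); lra. Qed.

Lemma count_le1 (P : nat -> Prop) n : (forall a b, (a < n)%nat -> (b < n)%nat -> P a -> P b -> a = b) ->
  Rsum (fun k => ind (P k)) n <= 1.
Proof. induction n; intros H; simpl. lra.
  unfold ind at 2. destruct (excluded_middle_informative (P n)) as [Pn|Pn].
  - rewrite (Rsum_ext _ (fun _ => 0)). assert (Rsum (fun _ : nat => 0) n = 0) by (clear; induction n; simpl; auto; rewrite IHn; ring). lra.
    intros k Hk. unfold ind. destruct (excluded_middle_informative (P k)); auto. assert (k = n) by (apply H; auto). lia.
  - assert (Rsum (fun k => ind (P k)) n <= 1) by (apply IHn; intros; apply H; auto). lra.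
Qed.

Lemma Rsum_RsumL {A} (l : list A) F n : Rsum (fun k => RsumL l (F k)) n = RsumL l (fun h => Rsum (fun k => F k h) n).
Proof. induction l; simpl. clear; induction n; simpl; auto; rewrite IHn; ring.
  rewrite Rsum_plus, IHl. auto. Qed.

Lemma wcs n w z A : 0 < A -> (forall k, (k < n)%nat -> 0 <= w k) -> Rsum w n <= A ->
  (Rsum (fun k => w k * z k) n) ^ 2 <= A * Rsum (fun k => w k * z k ^ 2) n.
Proof. intros HA Hw HW.
  set (S := Rsum (fun k => w k * z k) n). set (Q := Rsum (fun k => w k * z k ^ 2) n).
  assert (H : forall t, 0 <= Q - 2 * t * S + t ^ 2 * A).
  { intros t. apply Rle_trans with (Rsum (fun k => w k * (z k - t) ^ 2) n).
    apply Rsum_nonneg. intros k Hk. apply Rmult_le_pos. auto. apply pow2_ge_0.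
    replace (Rsum (fun k => w k * (z k - t) ^ 2) n) with (Q - 2 * t * S + t ^ 2 * Rsum w n).
    assert (0 <= t ^ 2) by apply pow2_ge_0. nra.
    unfold Q, S. rewrite <- !Rsum_scal. unfold Rminus. rewrite <- Rsum_opp, <- !Rsum_plus. apply Rsum_ext. intros; ring. }
  specialize (H (S / A)). clearbody S Q.
  replace (Q - 2 * (S / A) * S + (S / A) ^ 2 * A) with (Q - S ^ 2 / A) in H by (field; lra).
  apply (Rmult_le_reg_r (/ A)). apply Rinv_0_lt_compat; auto.
  replace (A * Q * / A) with Q by (field; lra). unfold Rdiv in H. lra.
Qed.

Lemma schur n (om : nat -> nat -> R) (z u : nat -> R) A : 0 < A ->
  (forall c c', (c < n)%nat -> (c' < n)%nat -> 0 <= om c c') ->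
  (forall c, (c < n)%nat -> Rsum (fun c' => om c c') n <= A) ->
  (forall c', (c' < n)%nat -> Rsum (fun c => om c c') n <= A) ->
  (forall c, (c < n)%nat -> 0 <= u c <= Rsum (fun c' => om c c' * z c') n) ->
  Rsum (fun c => u c ^ 2) n <= A ^ 2 * Rsum (fun c => z c ^ 2) n.
Proof. intros HA Hom Hr Hc Hu.
  apply Rle_trans with (Rsum (fun c => A * Rsum (fun c' => om c c' * z c' ^ 2) n) n).
  - apply Rsum_le. intros c Hcn. destruct (Hu c Hcn) as [U1 U2].
    eapply Rle_trans. 2: apply (wcs n (om c) z A); auto.
    apply pow_incr; auto.
  - rewrite Rsum_scal, Rsum_swap. simpl. rewrite Rmult_1_r, Rmult_assoc. apply Rmult_le_compat_l. lra.
    rewrite <- Rsum_scal. apply Rsum_le. intros c' Hc'.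
    rewrite (Rsum_ext _ (fun c => z c' ^ 2 * om c c')) by (intros; ring). rewrite Rsum_scal.
    rewrite Rmult_comm. apply Rmult_le_compat_r. apply pow2_ge_0. auto.
Qed.

Lemma Zsum_plus f g n : Zsum (fun j => (f j + g j)%Z) n = (Zsum f n + Zsum g n)%Z.
Proof. induction n; simpl; auto. rewrite IHn. ring. Qed.

Lemma l2normZ_sq d h : l2normZ d h ^ 2 = bZ d h.
Proof. unfold l2normZ. simpl. rewrite Rmult_1_r. apply sqrt_sqrt. apply bZ_nonneg. Qed.

Lemma bZ_add d h1 h2 : bZ d (fun j => (h1 j + h2 j)%Z) <= 2 * bZ d h1 + 2 * bZ d h2.
Proof. rewrite !bZ_eq. rewrite <- !Rsum_scal, <- Rsum_plus. apply Rsum_le. intros k _.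
  rewrite plus_IZR. assert (H := pow2_ge_0 (IZR (h1 k) - IZR (h2 k))). nra. Qed.

Lemma digit_eq (N x y : nat) : (x < N)%nat -> (y < N)%nat -> (Z.of_nat N | Z.of_nat x - Z.of_nat y)%Z -> x = y.
Proof. intros Hx Hy [k Hk]. assert (k = 0)%Z by (destruct (Z.lt_trichotomy k 0) as [?|[?|?]]; nia). subst. lia. Qed.

Section Main.
Variables (d r : nat) (Zm : nat -> nat -> Z) (nn : nat -> nat) (hs : nat -> nat -> Z).
Hypothesis Hpos : forall i, (i < r)%nat -> (1 <= nn i)%nat.
Hypothesis Hmin : min_norm_antialias d r Zm nn hs.
Variable gamma : R.
Hypothesis Hg : 0 < gamma.

Notation n := (npoints r nn).
Definition c0 := 2 * PI ^ 2 * gamma.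
Definition KK := 2 * c0 + 2.
Definition dd c := gamma / 2 * (4 * PI ^ 2 * l2normZ d (hs c) ^ 2).

Lemma c0_pos : 0 < c0.
Proof. unfold c0. assert (H := PI_RGT_0). assert (0 < PI ^ 2) by (apply pow_lt; lra). nra. Qed.

Lemma dd_eq c : dd c = c0 * bZ d (hs c).
Proof. unfold dd, c0. rewrite l2normZ_sq. field. Qed.

Lemma dd_nonneg c : 0 <= dd c.
Proof. rewrite dd_eq. apply Rmult_le_pos. left; apply c0_pos. apply bZ_nonneg. Qed.

Lemma uniq_r h c c1 c2 : (c1 < n)%nat -> (c2 < n)%nat -> cls d r Zm nn h c c1 -> cls d r Zm nn h c c2 -> c1 = c2.
Proof. intros H1 H2 A B. apply (ld_inj nn 0 r); auto. intros i Hi.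
  change (lexdig r nn c1 i = lexdig r nn c2 i).
  apply (digit_eq (nn i)). apply (ld_bound nn 0). apply Hpos; auto. apply (ld_bound nn 0). apply Hpos; auto.
  assert (D := Z.divide_sub_r _ _ _ (A i Hi) (B i Hi)). unfold xi in D.
  replace (Mi d Zm h i - Z.of_nat (lexdig r nn c i) + Z.of_nat (lexdig r nn c1 i) -
        (Mi d Zm h i - Z.of_nat (lexdig r nn c i) + Z.of_nat (lexdig r nn c2 i)))%Z
   with (Z.of_nat (lexdig r nn c1 i) - Z.of_nat (lexdig r nn c2 i))%Z in D by ring. auto. Qed.

Lemma uniq_l h c' c1 c2 : (c1 < n)%nat -> (c2 < n)%nat -> cls d r Zm nn h c1 c' -> cls d r Zm nn h c2 c' -> c1 = c2.
Proof. intros H1 H2 A B. apply (ld_inj nn 0 r); auto. intros i Hi.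
  change (lexdig r nn c1 i = lexdig r nn c2 i).
  apply (digit_eq (nn i)). apply (ld_bound nn 0). apply Hpos; auto. apply (ld_bound nn 0). apply Hpos; auto.
  assert (D := Z.divide_sub_r _ _ _ (B i Hi) (A i Hi)). unfold xi in D.
  replace (Mi d Zm h i - Z.of_nat (lexdig r nn c2 i) + Z.of_nat (lexdig r nn c' i) -
        (Mi d Zm h i - Z.of_nat (lexdig r nn c1 i) + Z.of_nat (lexdig r nn c' i)))%Z
   with (Z.of_nat (lexdig r nn c1 i) - Z.of_nat (lexdig r nn c2 i))%Z in D by ring. auto. Qed.

Lemma key c c' h : (c < n)%nat -> (c' < n)%nat -> cls d r Zm nn h c c' ->
  Rabs (dd c - dd c') <= KK * (1 + dd c') * (1 + bZ d h).
Proof. intros Hc Hc' Hcl.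
  set (h' := fun j => (hs c' j + h j)%Z).
  assert (Hdc : dual_cong d r Zm nn h' (lexdig r nn c)).
  { destruct (Hmin c' Hc') as [Dc' _]. intros i Hi. unfold h'.
    rewrite (Zsum_ext _ (fun j => (Zm i j * hs c' j + Zm i j * h j)%Z)) by (intros; ring).
    rewrite Zsum_plus.
    replace (Zsum (fun j => (Zm i j * hs c' j)%Z) d + Zsum (fun j => (Zm i j * h j)%Z) d - Z.of_nat (lexdig r nn c i))%Z
      with ((Zsum (fun j => (Zm i j * hs c' j)%Z) d - Z.of_nat (lexdig r nn c' i)) +
            (Mi d Zm h i - Z.of_nat (xi r nn c i) + Z.of_nat (xi r nn c' i)))%Z by (unfold Mi, xi; ring).
    apply Z.divide_add_r. apply Dc'; auto. apply Hcl; auto. }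
  destruct (Hmin c Hc) as [_ Mc]. assert (Hle := Mc h' Hdc).
  assert (Hsq : bZ d (hs c) <= bZ d h').
  { rewrite <- !l2normZ_sq. apply pow_incr. split; auto. apply sqrt_pos. }
  assert (Hadd := bZ_add d (hs c') h). fold h' in Hadd.
  rewrite !dd_eq. assert (Hc0 := c0_pos).
  assert (Ha := bZ_nonneg d (hs c)). assert (Ha' := bZ_nonneg d (hs c')). assert (Hb := bZ_nonneg d h).
  set (a := bZ d (hs c)) in *. set (a' := bZ d (hs c')) in *. set (b := bZ d h) in *. clearbody a a' b.
  unfold KK. apply Rabs_le. split.
  - assert (0 <= c0 * a) by nra. assert (0 <= c0 * a' * b) by (apply Rmult_le_pos; nra). assert (0 <= c0 * c0 * a') by (apply Rmult_le_pos; nra).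
    assert (0 <= c0 * c0 * a' * b) by (apply Rmult_le_pos; nra). nra.
  - assert (0 <= c0 * a') by nra. assert (0 <= c0 * a' * b) by (apply Rmult_le_pos; nra). assert (0 <= c0 * c0 * a') by (apply Rmult_le_pos; nra).
    assert (0 <= c0 * c0 * a' * b) by (apply Rmult_le_pos; nra). assert (0 <= c0 * b) by nra. nra.
Qed.
End Main.

Section B.
Variables (d r : nat) (Zm : nat -> nat -> Z) (nn : nat -> nat) (hs : nat -> nat -> Z).
Hypothesis Hpos : forall i, (i < r)%nat -> (1 <= nn i)%nat.
Hypothesis Hmin : min_norm_antialias d r Zm nn hs.
Variable gamma : R.
Hypothesis Hg : 0 < gamma.
Variable vhat : (nat -> Z) -> Cplx.
Variable m : nat.
Variable A : R.
Hypothesis HA1 : 1 <= A.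
Hypothesis HA : forall N, RsumL (boxlist d N) (fun h => sqrt (Cnorm2 (vhat h)) * (1 + bZ d h) ^ m) <= A.
Variable y : nat -> R.

Notation n := (npoints r nn).
Notation D := (dd d hs gamma).
Definition Km := KK gamma ^ m / gamma.

Definition om N c c' := Km * RsumL (boxlist d N) (fun h => ind (cls d r Zm nn h c c') * (cmod (vhat h) * (1 + bZ d h) ^ m)).
Definition Zc c' := (1 + D c') ^ m * Rabs (y c').
Definition compN N c := Csum (fun c' => Cmul (Cmul (RtoC ((D c - D c') ^ m / gamma)) (wN d r Zm nn vhat N c c')) (RtoC (y c'))) n.

Lemma KK_pos : 0 < KK gamma.
Proof. unfold KK. assert (H := c0_pos gamma Hg). lra. Qed.

Lemma Km_pos : 0 < Km.
Proof. unfold Km. apply Rdiv_lt_0_compat; auto. apply pow_lt, KK_pos. Qed.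

Lemma om_nonneg N c c' : 0 <= om N c c'.
Proof. unfold om. apply Rmult_le_pos. left; apply Km_pos. apply RsumL_nonneg. intros h _.
  apply Rmult_le_pos. apply ind_01. apply Rmult_le_pos. apply cmod_nonneg. apply pow_le. assert (H := bZ_nonneg d h). lra. Qed.

Lemma comp_bound N c : (c < n)%nat -> cmod (compN N c) <= Rsum (fun c' => om N c c' * Zc c') n.
Proof. intros Hc. unfold compN. eapply Rle_trans. apply cmod_Csum. apply Rsum_le. intros c' Hc'.
  rewrite !cmod_mul, !cmod_RtoC.
  assert (Hw : cmod (wN d r Zm nn vhat N c c') <= RsumL (boxlist d N) (fun h => ind (cls d r Zm nn h c c') * cmod (vhat h))).
  { unfold wN. eapply Rle_trans. apply cmod_CsumL. apply RsumL_le. intros h _. rewrite cmod_mul, cmod_RtoC.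
    rewrite Rabs_pos_eq by apply ind_01. rewrite Rmult_comm. apply Rle_refl. }
  assert (Ediv : forall x, Rabs (x / gamma) = Rabs x / gamma).
  { intros x. unfold Rdiv. rewrite Rabs_mult. rewrite (Rabs_pos_eq (/ gamma)); auto. left; apply Rinv_0_lt_compat; lra. }
  unfold om, Zc. rewrite Ediv. rewrite <- RPow_abs. rewrite <- Rmult_assoc.
  apply Rmult_le_compat_r. apply Rabs_pos.
  apply Rle_trans with (Rabs (D c - D c') ^ m / gamma * RsumL (boxlist d N) (fun h => ind (cls d r Zm nn h c c') * cmod (vhat h))).
  { apply Rmult_le_compat_l. apply Rle_mult_inv_pos; auto. apply pow_le, Rabs_pos. auto. }
  unfold Rdiv. rewrite Rmult_assoc, <- RsumL_scal. unfold Km. unfold Rdiv.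
  replace (KK gamma ^ m * / gamma * RsumL (boxlist d N) (fun h => ind (cls d r Zm nn h c c') * (cmod (vhat h) * (1 + bZ d h) ^ m)) * (1 + D c') ^ m)
    with (RsumL (boxlist d N) (fun h => / gamma * (ind (cls d r Zm nn h c c') * (KK gamma ^ m * (1 + D c') ^ m * (cmod (vhat h) * (1 + bZ d h) ^ m))))).
  2:{ rewrite RsumL_scal. rewrite (RsumL_ext _ _ (fun h => (KK gamma ^ m * (1 + D c') ^ m) * (ind (cls d r Zm nn h c c') * (cmod (vhat h) * (1 + bZ d h) ^ m)))) by (intros; ring).
      rewrite RsumL_scal. ring. }
  rewrite <- RsumL_scal. apply RsumL_le. intros h _.
  unfold ind. destruct (excluded_middle_informative (cls d r Zm nn h c c')) as [Hcl|Hcl].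
  - assert (K := key d r Zm nn hs Hmin gamma Hg c c' h Hc Hc' Hcl).
    assert (Hp : Rabs (D c - D c') ^ m <= KK gamma ^ m * (1 + D c') ^ m * (1 + bZ d h) ^ m).
    { rewrite <- !Rpow_mult_distr. apply pow_incr. split. apply Rabs_pos. auto. }
    assert (0 <= / gamma * cmod (vhat h)) by (apply Rmult_le_pos; [left; apply Rinv_0_lt_compat; lra | apply cmod_nonneg]).
    replace (Rabs (D c - D c') ^ m * (/ gamma * (1 * cmod (vhat h)))) with ((/ gamma * cmod (vhat h)) * Rabs (D c - D c') ^ m) by ring.
    replace (/ gamma * (1 * (KK gamma ^ m * (1 + D c') ^ m * (cmod (vhat h) * (1 + bZ d h) ^ m))))
      with ((/ gamma * cmod (vhat h)) * (KK gamma ^ m * (1 + D c') ^ m * (1 + bZ d h) ^ m)) by ring.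
    apply Rmult_le_compat_l; auto.
  - right; ring.
Qed.

Lemma row_sum N c : (c < n)%nat -> Rsum (fun c' => om N c c') n <= Km * A.
Proof. intros Hc. unfold om. rewrite Rsum_scal. apply Rmult_le_compat_l. left; apply Km_pos.
  rewrite Rsum_RsumL. eapply Rle_trans. 2: apply (HA N). apply RsumL_le. intros h _.
  rewrite (Rsum_ext _ (fun k => (cmod (vhat h) * (1 + bZ d h) ^ m) * ind (cls d r Zm nn h c k))) by (intros; ring).
  rewrite Rsum_scal. unfold cmod. rewrite <- (Rmult_1_r (sqrt (Cnorm2 (vhat h)) * (1 + bZ d h) ^ m)) at 2.
  apply Rmult_le_compat_l. apply Rmult_le_pos. apply sqrt_pos. apply pow_le. assert (H := bZ_nonneg d h). lra.
  apply count_le1. intros a b Ha Hb Pa Pb. eapply uniq_r; eauto.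
Qed.

Lemma col_sum N c' : (c' < n)%nat -> Rsum (fun c => om N c c') n <= Km * A.
Proof. intros Hc. unfold om. rewrite Rsum_scal. apply Rmult_le_compat_l. left; apply Km_pos.
  rewrite Rsum_RsumL. eapply Rle_trans. 2: apply (HA N). apply RsumL_le. intros h _.
  rewrite (Rsum_ext _ (fun k => (cmod (vhat h) * (1 + bZ d h) ^ m) * ind (cls d r Zm nn h k c'))) by (intros; ring).
  rewrite Rsum_scal. unfold cmod. rewrite <- (Rmult_1_r (sqrt (Cnorm2 (vhat h)) * (1 + bZ d h) ^ m)) at 2.
  apply Rmult_le_compat_l. apply Rmult_le_pos. apply sqrt_pos. apply pow_le. assert (H := bZ_nonneg d h). lra.
  apply count_le1. intros a b Ha Hb Pa Pb. eapply uniq_l; eauto.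
Qed.

Lemma sumsq N : Rsum (fun c => cmod (compN N c) ^ 2) n <= (Km * A) ^ 2 * Rsum (fun c => Zc c ^ 2) n.
Proof. apply schur with (om := om N). apply Rmult_lt_0_compat. apply Km_pos. lra.
  intros; apply om_nonneg. apply row_sum. apply col_sum.
  intros c Hc. split. apply cmod_nonneg. apply comp_bound; auto.
Qed.
End B.

Lemma Rcv_Rsum u l n : (forall k, (k < n)%nat -> Un_cv (fun N => u N k) (l k)) ->
  Un_cv (fun N => Rsum (u N) n) (Rsum l n).
Proof. induction n; intros H; simpl. apply Rcv_const. apply CV_plus. apply IHn; intros; apply H; lia. apply H; lia. Qed.

Lemma Cnorm2_cv u l : Ccv u l -> Un_cv (fun N => Cnorm2 (u N)) (Cnorm2 l).
Proof. intros [A B]. unfold Cnorm2. simpl.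
  apply CV_plus; apply CV_mult; auto; apply CV_mult; auto; apply Rcv_const. Qed.

Lemma vnorm_cv n u l : (forall k, (k < n)%nat -> Ccv (fun N => u N k) (l k)) ->
  Un_cv (fun N => vnorm n (u N)) (vnorm n l).
Proof. intros H. unfold vnorm. apply continuity_seq. apply continuity_pt_sqrt.
  apply Rsum_nonneg; intros; apply Cnorm2_nonneg.
  apply Rcv_Rsum. intros; apply Cnorm2_cv; auto. Qed.

Lemma main_m (d : nat) (gamma alpha : R) (v : (nat -> R) -> Cplx) (vhat : (nat -> Z) -> Cplx) (m : nat) :
  0 < gamma -> 1 < pp alpha m -> korobov d alpha vhat -> (forall x, fourier_series_at d vhat x (v x)) ->
  exists C, forall r Zm nn hs (y : nat -> R),
    canonical_lattice d r Zm nn -> min_norm_antialias d r Zm nn hs ->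
    vnorm (npoints r nn) (fun c => Csum (fun c' => Cmul (Cmul (RtoC ((dd d hs gamma c - dd d hs gamma c') ^ m / gamma))
          (Wn r Zm nn v c c')) (RtoC (y c'))) (npoints r nn))
    <= C * vnorm (npoints r nn) (fun c => RtoC ((1 + dd d hs gamma c) ^ m * y c)).
Proof.
  intros Hg Hp Hk Hfs. destruct (korobov_bound d alpha m vhat Hp Hk) as [A [HA1 HA]].
  exists (Km gamma m * A). intros r Zm nn hs y Hcan Hmin.
  assert (Hpos : forall i, (i < r)%nat -> (1 <= nn i)%nat) by apply Hcan.
  set (n := npoints r nn).
  eapply Rle_cv_lim with (Un := fun N => vnorm n (compN d r Zm nn hs gamma vhat m y N)) (Vn := fun _ => Km gamma m * A * vnorm n (fun c => RtoC ((1 + dd d hs gamma c) ^ m * y c))).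
  3: apply Rcv_const.
  2:{ apply vnorm_cv. intros c Hc.
      unfold compN. apply Ccv_Csum. intros c' Hc'. apply Ccv_mul; [|apply Ccv_const]. apply Ccv_mul. apply Ccv_const.
      apply W_lim; auto. }
  intros N. unfold vnorm.
  assert (S := sumsq d r Zm nn hs Hpos Hmin gamma Hg vhat m A HA1 HA y N).
  rewrite (Rsum_ext _ (fun c => cmod (compN d r Zm nn hs gamma vhat m y N c) ^ 2)) by (intros; rewrite cmod_sq; auto).
  rewrite (Rsum_ext (fun i => Cnorm2 (RtoC ((1 + dd d hs gamma i) ^ m * y i))) (fun c => Zc d hs gamma m y c ^ 2)).
  2:{ intros c _. unfold Zc, Cnorm2, RtoC. cbn [Cre Cim]. rewrite !Rpow_mult_distr, pow2_abs. ring. }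
  assert (Hkm : 0 <= Km gamma m * A) by (apply Rmult_le_pos; [left; apply Km_pos; auto | lra]).
  rewrite <- (sqrt_pow2 (Km gamma m * A)) at 1 by auto.
  rewrite <- sqrt_mult by (try apply pow2_ge_0; apply Rsum_nonneg; intros; apply pow2_ge_0).
  apply sqrt_le_1_alt. auto.
Qed.

Lemma D_diag d hs gamma : Mscale (gamma / 2) (Dn d hs) = Mdiag (fun c => RtoC (dd d hs gamma c)).
Proof. unfold Dn. rewrite Mscale_diag. f_equal. apply functional_extensionality. intros c. unfold dd. cext. Qed.

Lemma vnorm_ext n x x' : (forall c, (c < n)%nat -> x c = x' c) -> vnorm n x = vnorm n x'.
Proof. intros H. unfold vnorm. f_equal. apply Rsum_ext. intros; rewrite H; auto. Qed.

Theorem mainTheorem5 (d : nat) (gamma alpha beta : R)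
  (v : (nat -> R) -> Cplx) (vhat : (nat -> Z) -> Cplx)
  (g : (nat -> R) -> Cplx) (ghat : (nat -> Z) -> Cplx) :
  0 < gamma ->
  korobov d alpha vhat -> (forall x, fourier_series_at d vhat x (v x)) ->
  korobov d beta ghat -> (forall x, fourier_series_at d ghat x (g x)) -> 2 <= beta ->
  (5 / 2 < alpha ->
   exists c1 : R, forall (r : nat) (Zm : nat -> nat -> Z) (nn : nat -> nat)
     (hs : nat -> nat -> Z) (y : nat -> R),
     canonical_lattice d r Zm nn -> min_norm_antialias d r Zm nn hs ->
     let n := npoints r nn in
     let D := Mscale (gamma / 2) (Dn d hs) in
     let W := Mscale (1 / gamma) (Wn r Zm nn v) in
     vnorm n (Mvec n (Mcomm n D W) (fun k => RtoC (y k)))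
       <= c1 * vnorm n (Mvec n (Madd D Mid) (fun k => RtoC (y k)))) /\
  (9 / 2 < alpha ->
   exists c2 : R, forall (r : nat) (Zm : nat -> nat -> Z) (nn : nat -> nat)
     (hs : nat -> nat -> Z) (y : nat -> R),
     canonical_lattice d r Zm nn -> min_norm_antialias d r Zm nn hs ->
     let n := npoints r nn in
     let D := Mscale (gamma / 2) (Dn d hs) in
     let W := Mscale (1 / gamma) (Wn r Zm nn v) in
     vnorm n (Mvec n (Mcomm n D (Mcomm n D W)) (fun k => RtoC (y k)))
       <= c2 * vnorm n (Mvec n (Mmul n (Madd D Mid) (Madd D Mid)) (fun k => RtoC (y k)))).
Proof.
  intros Hg Hk Hfs _ _ _. split.
  - intros Ha. assert (Hp : 1 < pp alpha 1) by (unfold pp; simpl; lra).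
    destruct (main_m d gamma alpha v vhat 1 Hg Hp Hk Hfs) as [C HC].
    exists C. intros r Zm nn hs y Hcan Hmin n D W.
    specialize (HC r Zm nn hs y Hcan Hmin).
    unfold D, W. rewrite D_diag. rewrite Madd_diag_id.
    match goal with |- vnorm _ ?X <= _ * vnorm _ ?Y =>
      match type of HC with vnorm _ ?f <= _ * vnorm _ ?g =>
        rewrite (vnorm_ext n X f), (vnorm_ext n Y g); [exact HC | | ] end end.
    + intros c Hc. rewrite Mvec_diag by auto. cext.
    + intros c Hc. unfold Mvec. apply Csum_ext. intros c' Hc'. rewrite Mcomm_diag by auto. unfold Mscale. cext; field; lra.
  - intros Ha. assert (Hp : 1 < pp alpha 2) by (unfold pp; simpl; lra).
    destruct (main_m d gamma alpha v vhat 2 Hg Hp Hk Hfs) as [C HC].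
    exists C. intros r Zm nn hs y Hcan Hmin n D W.
    specialize (HC r Zm nn hs y Hcan Hmin).
    unfold D, W. rewrite D_diag. rewrite Madd_diag_id.
    match goal with |- vnorm _ ?X <= _ * vnorm _ ?Y =>
      match type of HC with vnorm _ ?f <= _ * vnorm _ ?g =>
        rewrite (vnorm_ext n X f), (vnorm_ext n Y g); [exact HC | | ] end end.
    + intros c Hc. unfold Mvec. rewrite (Csum_delta _ n c); auto.
      * rewrite Mmul_diag_diag by auto. unfold Mdiag. rewrite Nat.eqb_refl. cext.
      * intros k Hk0 Hne. rewrite Mmul_diag_diag by auto. unfold Mdiag. destruct (Nat.eqb_spec c k). lia. cext.
    + intros c Hc. unfold Mvec. apply Csum_ext. intros c' Hc'. rewrite !Mcomm_diag by auto. unfold Mscale. cext; field; lra.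
Qed.
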